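(* For any $\epsilon>0$ and $\sigma>0$ there exists an initial datum $a_0$ with $\int_{-\pi}^\pi a_0(x)dx=0$ and $$\|a_0-\cos(\cdot)\|_{C^{2-\epsilon}([-\pi,\pi])}\le\sigma$$ such that for every $\mu\in\mathbb R\setminus\{0\}$ there is no global-in-time solution $a$ of $$\partial_t a+\Big(\int_{-\pi}^x a(t,\bar x)\,d\bar x\Big)\partial_x a-a^2+\frac1\pi\int_{-\pi}^{\pi}a^2\,dx=0,\qquad x\in[-\pi,\pi],$$ with $\int_{-\pi}^\pi a(t,x)dx=0$ and $a(0,\cdot)=a_0$, satisfying $\|a(t,\cdot)-\mu\cos(\cdot)\|_{L^\infty([-\pi,\pi])}\to0$ as $t\to\infty$.
   Context: $C^{2-\epsilon}$ denotes the Hölder space of that order on $[-\pi,\pi]$. *)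

(* Defs.v *)
From Stdlib Require Import Reals Lra.
From Coquelicot Require Import Coquelicot.
Open Scope R_scope.

Definition Ipi (x : R) : Prop := - PI <= x <= PI.

Definition deriv_on_Ipi (f g : R -> R) : Prop :=
  forall x, Ipi x -> forall eta, 0 < eta -> exists delta, 0 < delta /\
    forall y, Ipi y -> 0 < Rabs (y - x) < delta ->
      Rabs ((f y - f x) / (y - x) - g x) <= eta.

Definition sup_le (f : R -> R) (A : R) : Prop :=
  forall x, Ipi x -> Rabs (f x) <= A.

Definition holder_semi_le (alpha : R) (f : R -> R) (C : R) : Prop :=
  forall x y, Ipi x -> Ipi y -> x <> y ->
    Rabs (f x - f y) <= C * Rpower (Rabs (x - y)) alpha.

(* f belongs to C^s([-pi,pi]) (0 < s < 2) and ||f||_{C^s} <= sigma, where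
   for 0 < s <= 1 : ||f|| = sup|f| + [f]_{s}             (space C^{0,s})
   for 1 < s < 2  : ||f|| = sup|f| + sup|f'| + [f']_{s-1} (space C^{1,s-1}).
   (Norm <= sigma is unfolded as: there are bounds for each sup summing to <= sigma.) *)
Definition holder_norm_le (s : R) (f : R -> R) (sigma : R) : Prop :=
  (s <= 1 /\ exists A C, sup_le f A /\ holder_semi_le s f C /\ A + C <= sigma)
  \/
  (1 < s /\ exists g A B C, deriv_on_Ipi f g /\ sup_le f A /\ sup_le g B /\
       holder_semi_le (s - 1) g C /\ A + B + C <= sigma).

Definition cont_on_domain (a : R -> R -> R) : Prop :=
  forall t x, 0 <= t -> Ipi x -> forall eta, 0 < eta -> exists delta, 0 < delta /\
    forall s y, 0 <= s -> Ipi y -> Rabs (s - t) < delta -> Rabs (y - x) < delta ->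
      Rabs (a s y - a t x) < eta.

Definition global_solution (a : R -> R -> R) (a0 : R -> R) : Prop :=
  (forall x, Ipi x -> a 0 x = a0 x) /\
  cont_on_domain a /\
  (forall t, 0 <= t -> RInt (a t) (- PI) PI = 0) /\
  exists ax at_ : R -> R -> R,
    (forall t, 0 <= t -> deriv_on_Ipi (a t) (ax t)) /\
    cont_on_domain ax /\
    (forall t x, 0 < t -> Ipi x -> is_derive (fun s => a s x) t (at_ t x)) /\
    (forall t x, 0 < t -> Ipi x ->
       at_ t x + RInt (a t) (- PI) x * ax t x - (a t x) ^ 2
       + / PI * RInt (fun y => (a t y) ^ 2) (- PI) PI = 0).

Definition converges_to_mu_cos (a : R -> R -> R) (mu : R) : Prop :=
  forall eta, 0 < eta -> exists T, forall t, T <= t -> forall x, Ipi x ->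
    Rabs (a t x - mu * cos x) <= eta.

(* Main.v *)
Require Import Defs.
From Stdlib Require Import Reals.
From Coquelicot Require Import Coquelicot.
From Stdlib Require Import Lra Classical ClassicalEpsilon.
Open Scope R_scope.


Lemma PI_gt3 : 3 < PI.
Proof. pose proof PI2_3_2. lra. Qed.

Definition clamp (x : R) : R := Rmax (- PI) (Rmin PI x).

Lemma clamp_Ipi x : Ipi (clamp x).
Proof.
  pose proof PI_gt3. unfold clamp, Ipi, Rmax, Rmin.
  repeat destruct Rle_dec; lra.
Qed.

Lemma clamp_id x : Ipi x -> clamp x = x.
Proof.
  unfold Ipi, clamp, Rmax, Rmin; intros; repeat destruct Rle_dec; lra.
Qed.

Lemma clamp_lip x y : Rabs (clamp x - clamp y) <= Rabs (x - y).
Proof.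
  pose proof PI_gt3. unfold clamp, Rmax, Rmin.
  repeat destruct Rle_dec; split_Rabs; lra.
Qed.

Definition contI (f : R -> R) : Prop :=
  forall x, Ipi x -> forall eta, 0 < eta -> exists delta, 0 < delta /\
    forall y, Ipi y -> Rabs (y - x) < delta -> Rabs (f y - f x) < eta.

Lemma contI_clamp_pt f : contI f -> forall x, continuity_pt (fun z => f (clamp z)) x.
Proof.
  intros Hf x. apply continuity_pt_locally. intros eps.
  destruct (Hf (clamp x) (clamp_Ipi x) eps (cond_pos eps)) as [d [Hd H]].
  exists (mkposreal d Hd). intros y Hy. simpl in Hy.
  change (Rabs (y - x) < d) in Hy.
  apply H. apply clamp_Ipi. pose proof (clamp_lip y x). lra.
Qed.

Lemma contI_clamp f : contI f -> forall x, continuous (fun z => f (clamp z)) x.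
Proof.
  intros Hf x. apply continuity_pt_filterlim. apply contI_clamp_pt; auto.
Qed.

Lemma contI_ex_RInt f lo hi : contI f -> Ipi lo -> Ipi hi -> ex_RInt f lo hi.
Proof.
  intros Hf Hl Hh.
  apply ex_RInt_ext with (fun z => f (clamp z)).
  { intros x Hx. rewrite clamp_id; auto. unfold Ipi in *.
    unfold Rmin, Rmax in Hx; destruct Rle_dec; lra. }
  apply (ex_RInt_continuous (V:=R_CompleteNormedModule)). intros; apply contI_clamp; auto.
Qed.

Lemma contI_max f : contI f -> exists xm, Ipi xm /\ forall x, Ipi x -> f x <= f xm.
Proof.
  intros Hf. pose proof PI_gt3.
  destruct (continuity_ab_maj (fun z => f (clamp z)) (-PI) PI) as [xm [H1 H2]].
  lra. intros; apply contI_clamp_pt; auto.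
  exists xm. split. exact H2.
  intros x Hx. specialize (H1 x Hx). rewrite !clamp_id in H1; auto.
Qed.

Lemma contI_bound f : contI f -> exists B, 0 <= B /\ forall x, Ipi x -> Rabs (f x) <= B.
Proof.
  intros Hf. pose proof PI_gt3.
  destruct (continuity_ab_maj (fun z => Rabs (f (clamp z))) (-PI) PI) as [xm [H1 H2]].
  lra. intros. apply continuity_pt_comp with (f1 := fun z => f (clamp z)) (f2 := Rabs).
  apply contI_clamp_pt; auto. apply Rcontinuity_abs.
  exists (Rabs (f (clamp xm))). split. apply Rabs_pos.
  intros x Hx. specialize (H1 x Hx). rewrite clamp_id in H1; auto.
Qed.

Lemma fermat_max F g x : deriv_on_Ipi F g -> Ipi x -> (forall y, Ipi y -> F y <= F x) ->
  - PI < x < PI -> g x = 0.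
Proof.
  intros HF Hx Hmax Hint.
  destruct (Rtotal_order (g x) 0) as [Hlt|[Heq|Hgt]]; auto; exfalso.
  - destruct (HF x Hx (- g x / 2) ltac:(lra)) as [d [Hd H]].
    set (y := x - Rmin d (x + PI) / 2).
    assert (0 < Rmin d (x + PI)) by (apply Rmin_pos; lra).
    assert (Rmin d (x+PI) <= d) by apply Rmin_l.
    assert (Rmin d (x+PI) <= x + PI) by apply Rmin_r.
    assert (Hy : Ipi y) by (unfold Ipi, y in *; lra).
    specialize (H y Hy). assert (y - x < 0) by (unfold y; lra).
    rewrite Rabs_left in H by lra. specialize (H ltac:(unfold y; lra)).
    pose proof (Hmax y Hy).
    assert ((F y - F x) / (y - x) >= 0).
    { unfold Rdiv. apply Rle_ge. replace (F y - F x) with (- (F x - F y)) by ring.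
      replace (/ (y - x)) with (- / (x - y)) by (field; lra).
      rewrite Rmult_opp_opp. apply Rmult_le_pos. lra. left; apply Rinv_0_lt_compat; lra. }
    apply Rabs_le_between in H. lra.
  - destruct (HF x Hx (g x / 2) ltac:(lra)) as [d [Hd H]].
    set (y := x + Rmin d (PI - x) / 2).
    assert (0 < Rmin d (PI - x)) by (apply Rmin_pos; lra).
    assert (Rmin d (PI - x) <= d) by apply Rmin_l.
    assert (Rmin d (PI - x) <= PI - x) by apply Rmin_r.
    assert (Hy : Ipi y) by (unfold Ipi, y in *; lra).
    specialize (H y Hy). assert (y - x > 0) by (unfold y; lra).
    rewrite Rabs_right in H by lra. specialize (H ltac:(unfold y; lra)).
    pose proof (Hmax y Hy).
    assert ((F y - F x) / (y - x) <= 0).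
    { unfold Rdiv. apply Rmult_le_0_r. lra. left; apply Rinv_0_lt_compat; lra. }
    apply Rabs_le_between in H. lra.
Qed.


Definition contOn (f : R -> R) (a b : R) : Prop :=
  forall t, a <= t <= b -> forall eps, 0 < eps -> exists d, 0 < d /\
    forall s, a <= s <= b -> Rabs (s - t) < d -> Rabs (f s - f t) < eps.

Lemma dini_aux (f : R -> R) a b e :
  a <= b -> contOn f a b ->
  (forall t, a < t < b -> f a - 1 <= f t -> forall eps, 0 < eps -> exists h0, 0 < h0 /\
      forall h, 0 < h < h0 -> f (t+h) - f t >= - eps * h) ->
  0 < e -> e * (b - a + 1) < 1 ->
  f b >= f a - e * (b - a) - e.
Proof.
  intros Hab Hc Hd He He1.
  set (E := fun s => a <= s <= b /\ forall r, a <= r <= s -> f r >= f a - e * (r - a) - e).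
  assert (Ea : E a).
  { split. lra. intros r Hr. replace r with a by lra. lra. }
  assert (Eb : bound E). { exists b. intros s [Hs _]. lra. }
  destruct (completeness E Eb (ex_intro _ a Ea)) as [m [Hm1 Hm2]].
  assert (Ham : a <= m) by (apply Hm1; exact Ea).
  assert (Hmb : m <= b) by (apply Hm2; intros s [Hs _]; lra).
  assert (C1 : forall r, a <= r < m -> f r >= f a - e * (r - a) - e).
  { intros r Hr.
    destruct (classic (exists s, E s /\ r < s)) as [[s [[Hs1 Hs2] Hs3]]|Hn].
    - apply Hs2. lra.
    - exfalso. assert (m <= r). { apply Hm2. intros s Hs. destruct (Rle_dec s r); auto.
        exfalso; apply Hn; exists s; split; auto; lra. } lra. }
  assert (C2 : f m >= f a - e * (m - a) - e).
  { destruct (Req_dec m a) as [->|Hne]. lra.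
    apply Rnot_lt_ge. intros Hlt.
    set (z := (f a - e * (m - a) - e - f m) / 2).
    destruct (Hc m (conj Ham Hmb) z ltac:(unfold z; lra)) as [d [Hd0 Hd1]].
    set (r := Rmax a (m - d / 2)).
    assert (a <= r) by apply Rmax_l. assert (m - d/2 <= r) by apply Rmax_r.
    assert (r < m) by (unfold r, Rmax; destruct Rle_dec; lra).
    specialize (C1 r ltac:(lra)).
    specialize (Hd1 r ltac:(lra) ltac:(rewrite Rabs_left; lra)).
    apply Rabs_lt_between in Hd1. unfold z in *. nra. }
  assert (C3 : m = b).
  { destruct (Req_dec m b) as [|Hne]; auto. exfalso.
    destruct (Req_dec m a) as [Hma|Hma].
    -
      subst m.
      destruct (Hc a (conj (Rle_refl a) Hab) e He) as [d [Hd0 Hd1]].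
      set (s := a + Rmin d (b - a) / 2).
      assert (0 < Rmin d (b - a)) by (apply Rmin_pos; lra).
      assert (Rmin d (b - a) <= d) by apply Rmin_l.
      assert (Rmin d (b - a) <= b - a) by apply Rmin_r.
      assert (E s).
      { split. unfold s; lra. intros r Hr.
        specialize (Hd1 r ltac:(unfold s in *; lra) ltac:(rewrite Rabs_right; unfold s in *; lra)).
        apply Rabs_lt_between in Hd1. nra. }
      assert (s <= a) by (apply Hm1; auto). unfold s in *. lra.
    - assert (Hmi : a < m < b) by lra.
      assert (f a - 1 <= f m) by nra.
      destruct (Hd m Hmi H e He) as [h0 [Hh0 Hh1]].
      set (s := m + Rmin h0 (b - m) / 2).
      assert (0 < Rmin h0 (b - m)) by (apply Rmin_pos; lra).
      assert (Rmin h0 (b - m) <= h0) by apply Rmin_l.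
      assert (Rmin h0 (b - m) <= b - m) by apply Rmin_r.
      assert (E s).
      { split. unfold s; lra. intros r Hr.
        destruct (Rlt_le_dec r m) as [Hrm|Hrm]. apply C1; lra.
        destruct (Req_dec r m) as [->|Hrm']. auto.
        specialize (Hh1 (r - m) ltac:(unfold s in *; lra)).
        replace (m + (r - m)) with r in Hh1 by ring. nra. }
      assert (s <= m) by (apply Hm1; auto). unfold s in *. lra. }
  subst m. exact C2.
Qed.

Lemma dini_mono (f : R -> R) a b :
  a <= b -> contOn f a b ->
  (forall t, a < t < b -> f a - 1 <= f t -> forall eps, 0 < eps -> exists h0, 0 < h0 /\
      forall h, 0 < h < h0 -> f (t+h) - f t >= - eps * h) ->
  f a <= f b.
Proof.
  intros Hab Hc Hd. apply Rnot_lt_le. intros Hlt.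
  set (e := Rmin ((f a - f b) / (2 * (b - a + 1))) (1 / (2 * (b - a + 1)))).
  assert (0 < e) by (apply Rmin_pos; apply Rdiv_lt_0_compat; lra).
  assert (e <= (f a - f b) / (2 * (b - a + 1))) by apply Rmin_l.
  assert (e <= 1 / (2 * (b - a + 1))) by apply Rmin_r.
  assert (e * (b - a + 1) <= (f a - f b) / 2).
  { apply Rmult_le_compat_r with (r := b - a + 1) in H0; [|lra].
    replace ((f a - f b) / (2 * (b - a + 1)) * (b - a + 1)) with ((f a - f b)/2) in H0 by (field; lra). lra. }
  assert (e * (b - a + 1) <= 1/2).
  { apply Rmult_le_compat_r with (r := b - a + 1) in H1; [|lra].
    replace (1 / (2 * (b - a + 1)) * (b - a + 1)) with (1/2) in H1 by (field; lra). lra. }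
  pose proof (dini_aux f a b e Hab Hc Hd H ltac:(lra)). nra.
Qed.


Lemma exp_lin (lam t z : R) : 0 < z -> exists h1, 0 < h1 /\ forall h, 0 < h < h1 ->
  Rabs (exp (-lam*(t+h)) - exp (-lam*t) + lam * exp (-lam*t) * h) <= z * h /\
  Rabs (exp (-lam*(t+h)) - exp (-lam*t)) <= z.
Proof.
  intros Hz.
  assert (Hd : is_derive (fun s => exp (-lam*s)) t (- lam * exp (-lam * t))).
  { auto_derive. auto. ring. }
  apply is_derive_Reals in Hd.
  destruct (Hd z Hz) as [d Hd1].
  set (E0 := exp (-lam*t)). assert (0 < E0) by apply exp_pos.
  set (h1 := Rmin d (z / (Rabs lam * E0 + z + 1))).
  assert (0 < z / (Rabs lam * E0 + z + 1)).
  { apply Rdiv_lt_0_compat; auto. pose proof (Rabs_pos lam). nra. }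
  exists h1. split. apply Rmin_pos; auto. apply cond_pos.
  intros h Hh.
  assert (h < d) by (apply Rlt_le_trans with h1; [lra|apply Rmin_l]).
  assert (Hh2 : h < z / (Rabs lam * E0 + z + 1)) by (apply Rlt_le_trans with h1; [lra|apply Rmin_r]).
  specialize (Hd1 h ltac:(lra) ltac:(rewrite Rabs_right; lra)).
  assert (Heq : exp (- lam * (t + h)) - E0 + lam * E0 * h =
     h * ((exp (- lam * (t + h)) - exp (- lam * t)) / h - - lam * exp (- lam * t))).
  { unfold E0. field. lra. }
  assert (HH1 : Rabs (exp (- lam * (t + h)) - E0 + lam * E0 * h) <= z * h).
  { rewrite Heq, Rabs_mult, Rabs_right by lra. 
    rewrite Rmult_comm. apply Rmult_le_compat_r; lra. }
  split. exact HH1.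
  assert (Rabs (lam * E0 * h) <= Rabs lam * E0 * h).
  { rewrite !Rabs_mult, (Rabs_right E0), (Rabs_right h) by lra. lra. }
  assert (Rabs (exp (- lam * (t + h)) - E0) <= (Rabs lam * E0 + z) * h).
  { replace (exp (- lam * (t + h)) - E0) with ((exp (- lam * (t + h)) - E0 + lam * E0 * h) - lam*E0*h) by ring.
    eapply Rle_trans. apply Rabs_triang_inv2' || apply Rabs_triang. 
    rewrite Rabs_Ropp. lra. }
  assert ((Rabs lam * E0 + z) * h <= z).
  { apply Rmult_lt_compat_l with (r := Rabs lam * E0 + z + 1) in Hh2.
    2: pose proof (Rabs_pos lam); nra.
    replace ((Rabs lam * E0 + z + 1) * (z / (Rabs lam * E0 + z + 1))) with z in Hh2.
    2: field; pose proof (Rabs_pos lam); nra. nra. }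
  unfold E0 in *. lra.
Qed.

Lemma exp_cont_at (lam t eps : R) : 0 < eps -> exists d, 0 < d /\ forall s,
  Rabs (s - t) < d -> Rabs (exp (-lam*s) - exp (-lam*t)) < eps.
Proof.
  intros He.
  assert (Hc : continuity_pt (fun s => exp (-lam*s)) t).
  { apply derivable_continuous_pt. apply ex_derive_Reals_0. auto_derive. auto. }
  destruct (proj1 (continuity_pt_locally _ _) Hc (mkposreal eps He)) as [d Hd].
  exists d. split. apply cond_pos. intros s Hs. apply (Hd s). exact Hs.
Qed.

Lemma dini_exp (f : R -> R) a b lam D :
  a <= b -> lam <> 0 -> contOn f a b ->
  (forall t, a < t < b -> forall eps, 0 < eps -> exists h0, 0 < h0 /\
      forall h, 0 < h < h0 -> f (t+h) - f t >= h * (lam * f t + D - eps)) ->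
  (f a + D/lam) * exp (-lam*a) <= (f b + D/lam) * exp (-lam*b).
Proof.
  intros Hab Hlam Hc Hd.
  apply (dini_mono (fun t => (f t + D/lam) * exp (-lam*t)) a b Hab).
  - intros t Ht eps He.
    set (E0 := exp (-lam*t)). assert (0 < E0) by apply exp_pos.
    set (F0 := f t + D/lam).
    destruct (Hc t Ht (eps / (2 * (E0 + 1))) ltac:(apply Rdiv_lt_0_compat; lra)) as [d1 [Hd1 Hd1']].
    destruct (exp_cont_at lam t (Rmin 1 (eps / (2 * (Rabs F0 + 1)))) ltac:(apply Rmin_pos; [lra|apply Rdiv_lt_0_compat; [lra| pose proof (Rabs_pos F0); lra]])) as [d2 [Hd2 Hd2']].
    exists (Rmin d1 d2). split. apply Rmin_pos; auto.
    intros s Hs Hst.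
    assert (Rabs (s - t) < d1) by (apply Rlt_le_trans with (Rmin d1 d2); [auto|apply Rmin_l]).
    assert (Rabs (s - t) < d2) by (apply Rlt_le_trans with (Rmin d1 d2); [auto|apply Rmin_r]).
    specialize (Hd1' s Hs H0). specialize (Hd2' s H1).
    assert (Rmin 1 (eps / (2 * (Rabs F0 + 1))) <= 1) by apply Rmin_l.
    assert (Rmin 1 (eps / (2 * (Rabs F0 + 1))) <= eps / (2 * (Rabs F0 + 1))) by apply Rmin_r.
    set (E1 := exp (-lam*s)) in *. fold E0 in Hd2'.
    replace ((f s + D / lam) * E1 - F0 * E0) with
      ((f s - f t) * E1 + F0 * (E1 - E0)) by (unfold F0; ring).
    assert (HE1 : 0 < E1) by apply exp_pos.
    assert (Rabs E1 <= E0 + 1) by (rewrite Rabs_right by lra; apply Rabs_lt_between in Hd2'; lra).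
    eapply Rle_lt_trans. apply Rabs_triang. rewrite !Rabs_mult.
    assert (B1 : Rabs (f s - f t) * Rabs E1 <= eps / (2 * (E0 + 1)) * (E0 + 1)).
    { apply Rmult_le_compat; try apply Rabs_pos; lra. }
    assert (B2 : Rabs F0 * Rabs (E1 - E0) <= Rabs F0 * (eps / (2 * (Rabs F0 + 1)))).
    { apply Rmult_le_compat_l. apply Rabs_pos. lra. }
    assert (B3 : Rabs F0 * (eps / (2 * (Rabs F0 + 1))) < eps / 2).
    { pose proof (Rabs_pos F0). 
      replace (Rabs F0 * (eps / (2 * (Rabs F0 + 1)))) with ((eps/2) * (Rabs F0 / (Rabs F0 + 1))) by (field; lra).
      assert (Rabs F0 / (Rabs F0 + 1) < 1). { apply Rmult_lt_reg_r with (Rabs F0 + 1). lra.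
        unfold Rdiv. rewrite Rmult_assoc, Rinv_l by lra. lra. } nra. }
    replace (eps / (2 * (E0 + 1)) * (E0 + 1)) with (eps/2) in B1 by (field; lra).
    lra.
  - intros t Ht _ eps He.
    set (E0 := exp (-lam*t)). assert (HE0 : 0 < E0) by apply exp_pos.
    set (F0 := f t + D/lam).
    set (e1 := eps / (3 * (E0 + 1))).
    assert (He1 : 0 < e1) by (apply Rdiv_lt_0_compat; lra).
    set (z := Rmin 1 (Rmin (eps / (3 * (Rabs F0 + 1))) (eps / (3 * (Rabs (lam * F0) + 1))))).
    assert (Hz : 0 < z).
    { apply Rmin_pos. lra. apply Rmin_pos; apply Rdiv_lt_0_compat; try lra;
      [pose proof (Rabs_pos F0)|pose proof (Rabs_pos (lam*F0))]; lra. }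
    assert (Hz1 : z <= 1) by apply Rmin_l.
    assert (Hz2 : z <= eps / (3 * (Rabs F0 + 1))) by (eapply Rle_trans; [apply Rmin_r|apply Rmin_l]).
    assert (Hz3 : z <= eps / (3 * (Rabs (lam*F0) + 1))) by (eapply Rle_trans; [apply Rmin_r|apply Rmin_r]).
    destruct (Hd t Ht e1 He1) as [h0 [Hh0 Hh0']].
    destruct (exp_lin lam t z Hz) as [h1 [Hh1 Hh1']].
    exists (Rmin h0 h1). split. apply Rmin_pos; auto.
    intros h Hh.
    assert (h < h0) by (apply Rlt_le_trans with (Rmin h0 h1); [lra|apply Rmin_l]).
    assert (h < h1) by (apply Rlt_le_trans with (Rmin h0 h1); [lra|apply Rmin_r]).
    specialize (Hh0' h ltac:(lra)). destruct (Hh1' h ltac:(lra)) as [Hr1 Hr2].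
    fold E0 in Hr1, Hr2. set (E1 := exp (- lam * (t + h))) in *.
    assert (HE1 : 0 < E1) by apply exp_pos.
    assert (HF : f (t + h) + D/lam - F0 >= h * (lam * F0 - e1)).
    { unfold F0. replace (lam * (f t + D / lam)) with (lam * f t + D) by (field; auto). lra. }
    replace ((f (t + h) + D / lam) * E1 - F0 * E0) with
      ((f (t + h) + D / lam - F0) * E1 + F0 * (E1 - E0)) by (unfold F0; ring).
    set (r := E1 - E0 + lam * E0 * h) in *.
    replace (E1 - E0) with (r - lam * E0 * h) by (unfold r; ring).
    assert (A1 : (f (t + h) + D / lam - F0) * E1 >= h * (lam * F0 - e1) * E1).
    { apply Rle_ge, Rmult_le_compat_r; lra. }
    assert (A2 : Rabs (h * (lam*F0) * (E1 - E0)) <= h * (Rabs (lam*F0)) * z).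
    { rewrite Rabs_mult, (Rabs_mult h (lam*F0)), (Rabs_right h) by lra. apply Rmult_le_compat_l. 
      apply Rmult_le_pos; [lra|apply Rabs_pos]. auto. }
    assert (A3 : Rabs (F0 * r) <= Rabs F0 * (z * h)).
    { rewrite Rabs_mult. apply Rmult_le_compat_l. apply Rabs_pos. auto. }
    assert (A4 : E1 <= E0 + 1) by (apply Rabs_le_between in Hr2; lra).
    assert (A5 : h * e1 * E1 <= h * (eps/3)).
    { unfold e1. apply Rle_trans with (h * (eps / (3 * (E0 + 1))) * (E0 + 1)).
      apply Rmult_le_compat_l. apply Rmult_le_pos; [lra | apply Rlt_le; exact He1]. lra.
      right; field; lra. }
    assert (A6 : h * (Rabs (lam*F0)) * z <= h * (eps/3)).
    { rewrite Rmult_assoc. apply Rmult_le_compat_l. lra.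
      apply Rle_trans with (Rabs (lam * F0) * (eps / (3 * (Rabs (lam * F0) + 1)))).
      apply Rmult_le_compat_l. apply Rabs_pos. auto.
      pose proof (Rabs_pos (lam*F0)).
      replace (Rabs (lam * F0) * (eps / (3 * (Rabs (lam * F0) + 1)))) with ((eps/3) * (Rabs (lam*F0) / (Rabs (lam*F0) + 1))) by (field; lra).
      assert (Rabs (lam*F0) / (Rabs (lam*F0) + 1) <= 1). { apply Rmult_le_reg_r with (Rabs (lam*F0) + 1). lra.
        unfold Rdiv. rewrite Rmult_assoc, Rinv_l by lra. lra. } nra. }
    assert (A7 : Rabs F0 * (z * h) <= h * (eps/3)).
    { replace (Rabs F0 * (z * h)) with (h * (Rabs F0 * z)) by ring. apply Rmult_le_compat_l. lra.
      apply Rle_trans with (Rabs F0 * (eps / (3 * (Rabs F0 + 1)))).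
      apply Rmult_le_compat_l. apply Rabs_pos. auto.
      pose proof (Rabs_pos F0).
      replace (Rabs F0 * (eps / (3 * (Rabs F0 + 1)))) with ((eps/3) * (Rabs F0 / (Rabs F0 + 1))) by (field; lra).
      assert (Rabs F0 / (Rabs F0 + 1) <= 1). { apply Rmult_le_reg_r with (Rabs F0 + 1). lra.
        unfold Rdiv. rewrite Rmult_assoc, Rinv_l by lra. lra. } nra. }
    apply Rabs_le_between in A2. apply Rabs_le_between in A3.
    assert (h * (lam * F0 - e1) * E1 + F0 * (r - lam * E0 * h) =
            h * (lam * F0) * (E1 - E0) - h * e1 * E1 + F0 * r) by (unfold r; ring).
    nra.
Qed.


Lemma slice_unif (f : R -> R -> R) : cont_on_domain f -> forall t, 0 <= t ->
  forall eta, 0 < eta -> exists d, 0 < d /\ forall s x y, 0 <= s -> Ipi x -> Ipi y ->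
    Rabs (s - t) < d -> Rabs (y - x) < d -> Rabs (f s y - f t x) < eta.
Proof.
  intros Hf t Ht eta He.
  assert (G : forall x, exists dd : posreal, Ipi x -> forall s y, 0 <= s -> Ipi y ->
     Rabs (s - t) < 2*dd -> Rabs (y - x) < 2*dd -> Rabs (f s y - f t x) < eta/2).
  { intros x. destruct (classic (Ipi x)) as [Hx|Hx].
    - destruct (Hf t x Ht Hx (eta/2) ltac:(lra)) as [dl [Hdl Hdl']].
      exists (mkposreal (dl/2) ltac:(lra)). intros _ s y Hs Hy H1 H2. simpl in *.
      apply Hdl'; auto; lra.
    - exists (mkposreal 1 Rlt_0_1). intros; contradiction. }
  pose (dd := fun x => proj1_sig (constructive_indefinite_description _ (G x))).
  assert (Hdd : forall x, Ipi x -> forall s y, 0 <= s -> Ipi y ->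
     Rabs (s - t) < 2*dd x -> Rabs (y - x) < 2*dd x -> Rabs (f s y - f t x) < eta/2).
  { intros x. exact (proj2_sig (constructive_indefinite_description _ (G x))). }
  destruct (compactness_value_1d (-PI) PI dd) as [d Hd].
  exists d. split. apply cond_pos.
  intros s x y Hs Hx Hy Hst Hyx.
  specialize (Hd x Hx). apply NNPP in Hd. destruct Hd as [z [Hz [Hxz Hdz]]].
  assert (Hz' : Ipi z) by exact Hz.
  pose proof (cond_pos (dd z)).
  assert (A1 : Rabs (f s y - f t z) < eta/2).
  { apply Hdd; auto. lra. 
    replace (y - z) with ((y - x) + (x - z)) by ring.
    eapply Rle_lt_trans. apply Rabs_triang. lra. }
  assert (A2 : Rabs (f t x - f t z) < eta/2).
  { apply Hdd; auto. unfold Rminus; rewrite Rplus_opp_r, Rabs_R0. lra. lra. }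
  replace (f s y - f t x) with ((f s y - f t z) - (f t x - f t z)) by ring.
  eapply Rle_lt_trans. apply Rabs_triang. rewrite Rabs_Ropp. lra.
Qed.

Lemma slice_contI (f : R -> R -> R) t : cont_on_domain f -> 0 <= t -> contI (f t).
Proof.
  intros Hf Ht x Hx eta He. destruct (Hf t x Ht Hx eta He) as [d [Hd H]].
  exists d. split; auto. intros y Hy Hyx. apply H; auto.
  unfold Rminus; rewrite Rplus_opp_r, Rabs_R0. lra.
Qed.

Lemma bound_on (f : R -> R -> R) : cont_on_domain f -> forall T, 0 <= T ->
  exists K, 0 <= K /\ forall s x, 0 <= s <= T -> Ipi x -> Rabs (f s x) <= K.
Proof.
  intros Hf T HT.
  assert (G : forall t, exists dd : posreal, 0 <= t -> forall s x, 0 <= s ->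
     Ipi x -> Rabs (s - t) < 2*dd -> Rabs (f s x - f t x) < 1).
  { intros t. destruct (Rle_dec 0 t) as [Ht|Ht].
    - destruct (slice_unif f Hf t Ht 1 Rlt_0_1) as [dl [Hdl Hdl']].
      exists (mkposreal (dl/2) ltac:(lra)). intros _ s x Hs Hx H1. simpl in *.
      apply Hdl'; auto; try lra. unfold Rminus; rewrite Rplus_opp_r, Rabs_R0. lra.
    - exists (mkposreal 1 Rlt_0_1). intros; contradiction. }
  pose (dd := fun x => proj1_sig (constructive_indefinite_description _ (G x))).
  assert (Hdd : forall t, 0 <= t -> forall s x, 0 <= s ->
     Ipi x -> Rabs (s - t) < 2*dd t -> Rabs (f s x - f t x) < 1).
  { intros t. exact (proj2_sig (constructive_indefinite_description _ (G t))). }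
  destruct (compactness_value_1d 0 T dd) as [d Hd].
  destruct (contI_bound (f 0) (slice_contI f 0 Hf (Rle_refl 0))) as [B0 [HB0 HB0']].
  assert (Hd0 := cond_pos d).
  assert (Cl : forall n : nat, forall s, 0 <= s <= T -> s <= INR n * (d/2) -> forall x, Ipi x ->
     Rabs (f s x) <= B0 + 2 * INR n).
  { induction n as [|n IH]; intros s Hs Hsn x Hx.
    - simpl in *. replace s with 0 by lra. rewrite Rmult_0_r, Rplus_0_r. auto.
    - rewrite S_INR in *. pose proof (pos_INR n).
      destruct (Rle_dec s (INR n * (d/2))) as [Hle|Hgt].
      + specialize (IH s Hs Hle x Hx). lra.
      + set (s' := INR n * (d/2)).
        assert (Hs' : 0 <= s' <= T) by (unfold s'; split; [nra|lra]).
        specialize (IH s' Hs' (Rle_refl _) x Hx).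
        assert (Hss : s' < s) by (unfold s'; nra).
        specialize (Hd s' Hs'). apply NNPP in Hd. destruct Hd as [z [Hz [Hsz Hdz]]].
        pose proof (cond_pos (dd z)).
        assert (A1 : Rabs (f s x - f z x) < 1).
        { apply Hdd; auto; try lra.
          replace (s - z) with ((s - s') + (s' - z)) by ring.
          assert (s - s' <= d/2) by (unfold s'; nra).
          eapply Rle_lt_trans. apply Rabs_triang. rewrite (Rabs_right (s - s')) by lra.
          lra. }
        assert (A2 : Rabs (f s' x - f z x) < 1).
        { apply Hdd; auto; try lra. }
        replace (f s x) with ((f s x - f z x) - (f s' x - f z x) + f s' x) by ring.
        eapply Rle_trans. apply Rabs_triang. eapply Rle_trans. apply Rplus_le_compat_r. apply Rabs_triang.
        rewrite Rabs_Ropp. lra. }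
  destruct (INR_archimed (d/2) T ltac:(lra)) as [n Hn].
  exists (B0 + 2 * INR n). split. pose proof (pos_INR n). lra.
  intros s x Hs Hx. apply (Cl n); auto. lra.
Qed.


Lemma contI_interior f x : contI f -> -PI < x < PI -> continuity_pt f x.
Proof.
  intros Hf Hx. apply (proj2 (continuity_pt_locally _ _)). intros eps.
  destruct (Hf x ltac:(unfold Ipi; lra) eps (cond_pos eps)) as [d [Hd H]].
  assert (Hm : 0 < Rmin d (Rmin (x + PI) (PI - x))) by (repeat apply Rmin_pos; lra).
  exists (mkposreal _ Hm). intros y Hy. change (Rabs (y - x) < Rmin d (Rmin (x + PI) (PI - x))) in Hy.
  pose proof (Rmin_l d (Rmin (x + PI) (PI - x))). pose proof (Rmin_r d (Rmin (x + PI) (PI - x))).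
  pose proof (Rmin_l (x + PI) (PI - x)). pose proof (Rmin_r (x + PI) (PI - x)).
  apply H. unfold Ipi. apply Rabs_lt_between in Hy. lra. lra.
Qed.

Lemma RInt_split3 f a b c d : contI f -> Ipi a -> Ipi b -> Ipi c -> Ipi d ->
  RInt f a d = RInt f a b + RInt f b c + RInt f c d.
Proof.
  intros Hf Ha Hb Hc Hd.
  rewrite <- (RInt_Chasles f a c d) by (apply contI_ex_RInt; auto).
  rewrite <- (RInt_Chasles f a b c) by (apply contI_ex_RInt; auto).
  reflexivity.
Qed.

Lemma ftc_Ipi F f : contI F -> contI f -> (forall x, -PI < x < PI -> is_derive F x (f x)) ->
  RInt f (-PI) PI = F PI - F (-PI).
Proof.
  intros HF Hf HD. pose proof PI_gt3.
  destruct (contI_bound f Hf) as [B [HB HB']].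
  apply Rminus_diag_uniq. apply Rabs_eq_0. apply Rle_antisym; [|apply Rabs_pos].
  apply Rnot_lt_le. intros Hpos.
  set (Dl := Rabs (RInt f (- PI) PI - (F PI - F (- PI)))) in *.
  destruct (HF PI ltac:(unfold Ipi; lra) (Dl/3) ltac:(lra)) as [d1 [Hd1 Hd1']].
  destruct (HF (-PI) ltac:(unfold Ipi; lra) (Dl/3) ltac:(lra)) as [d2 [Hd2 Hd2']].
  set (r := Rmin (Rmin (d1/2) (d2/2)) (Rmin 1 (Dl / (6 * (B + 1))))).
  assert (Hr0 : 0 < r). { repeat apply Rmin_pos; try lra. apply Rdiv_lt_0_compat; lra. }
  assert (Hr1 : r <= d1/2) by (unfold r; eapply Rle_trans; apply Rmin_l).
  assert (Hr2 : r <= d2/2) by (unfold r; eapply Rle_trans; [apply Rmin_l|apply Rmin_r]).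
  assert (Hr3 : r <= 1) by (unfold r; eapply Rle_trans; [apply Rmin_r|apply Rmin_l]).
  assert (Hr4 : r <= Dl / (6 * (B + 1))) by (unfold r; eapply Rle_trans; [apply Rmin_r|apply Rmin_r]).
  assert (Hmid : RInt f (-PI + r) (PI - r) = F (PI - r) - F (-PI + r)).
  { apply is_RInt_unique. apply (is_RInt_derive (V:=R_CompleteNormedModule)).
    - intros x Hx. rewrite Rmin_left, Rmax_right in Hx by lra. apply HD; lra.
    - intros x Hx. rewrite Rmin_left, Rmax_right in Hx by lra.
      apply continuity_pt_filterlim. apply contI_interior; auto; lra. }
  assert (Hsplit : RInt f (-PI) PI = RInt f (- PI) (- PI + r) + (F (PI - r) - F (- PI + r)) + RInt f (PI - r) PI).
  { rewrite (RInt_split3 f (-PI) (-PI + r) (PI - r) PI) by (auto; unfold Ipi; lra).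
    rewrite Hmid. reflexivity. }
  assert (A1 : Rabs (RInt f (- PI) (- PI + r)) <= r * B).
  { eapply Rle_trans. apply abs_RInt_le_const. lra. apply contI_ex_RInt; auto; unfold Ipi; lra.
    intros t Ht. apply HB'. unfold Ipi; lra. right; ring. }
  assert (A2 : Rabs (RInt f (PI - r) PI) <= r * B).
  { eapply Rle_trans. apply abs_RInt_le_const. lra. apply contI_ex_RInt; auto; unfold Ipi; lra.
    intros t Ht. apply HB'. unfold Ipi; lra. right; ring. }
  assert (A3 : Rabs (F (PI - r) - F PI) < Dl / 3).
  { apply Hd1'. unfold Ipi; lra. rewrite Rabs_left by lra. lra. }
  assert (A4 : Rabs (F (-PI + r) - F (-PI)) < Dl / 3).
  { apply Hd2'. unfold Ipi; lra. rewrite Rabs_right by lra. lra. }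
  assert (A5 : r * B < Dl / 6).
  { apply Rle_lt_trans with (Dl / (6 * (B + 1)) * B). apply Rmult_le_compat_r; lra.
    replace (Dl / (6 * (B + 1)) * B) with ((Dl / 6) * (B / (B + 1))) by (field; lra).
    assert (B / (B + 1) < 1). { apply Rmult_lt_reg_r with (B + 1). lra.
        unfold Rdiv. rewrite Rmult_assoc, Rinv_l by lra. lra. } nra. }
  assert (Dl <= Rabs (RInt f (- PI) (- PI + r)) + Rabs (RInt f (PI - r) PI) +
             Rabs (F (PI - r) - F PI) + Rabs (F (-PI + r) - F (-PI))).
  { unfold Dl. rewrite Hsplit.
    replace (RInt f (- PI) (- PI + r) + (F (PI - r) - F (- PI + r)) + RInt f (PI - r) PI - (F PI - F (- PI)))
     with (RInt f (- PI) (- PI + r) + RInt f (PI - r) PI + (F (PI - r) - F PI) - (F (-PI + r) - F (-PI))) by ring.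
    eapply Rle_trans. apply Rabs_triang. rewrite Rabs_Ropp.
    eapply Rle_trans. apply Rplus_le_compat_r. apply Rabs_triang.
    eapply Rle_trans. apply Rplus_le_compat_r. apply Rplus_le_compat_r. apply Rabs_triang. lra. }
  lra.
Qed.


Lemma contI_of_clamp f : (forall x, Ipi x -> continuity_pt (fun z => f (clamp z)) x) -> contI f.
Proof.
  intros H x Hx eta He.
  destruct (proj1 (continuity_pt_locally _ _) (H x Hx) (mkposreal eta He)) as [d Hd].
  exists d. split. apply cond_pos. intros y Hy Hyx.
  specialize (Hd y Hyx). simpl in Hd. rewrite !clamp_id in Hd; auto.
Qed.

Lemma contI_mult f g : contI f -> contI g -> contI (fun x => f x * g x).
Proof.
  intros Hf Hg. apply contI_of_clamp. intros x _.
  apply (continuity_pt_mult (fun z => f (clamp z)) (fun z => g (clamp z)));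
  apply contI_clamp_pt; auto.
Qed.

Lemma contI_plus f g : contI f -> contI g -> contI (fun x => f x + g x).
Proof.
  intros Hf Hg. apply contI_of_clamp. intros x _.
  apply (continuity_pt_plus (fun z => f (clamp z)) (fun z => g (clamp z)));
  apply contI_clamp_pt; auto.
Qed.

Lemma contI_minus f g : contI f -> contI g -> contI (fun x => f x - g x).
Proof.
  intros Hf Hg. apply contI_of_clamp. intros x _.
  apply (continuity_pt_minus (fun z => f (clamp z)) (fun z => g (clamp z)));
  apply contI_clamp_pt; auto.
Qed.

Lemma contI_const c : contI (fun _ => c).
Proof. intros x _ eta He. exists 1. split. lra. intros. unfold Rminus; rewrite Rplus_opp_r, Rabs_R0. lra. Qed.

Lemma contI_comp f g : contI f -> (forall x, Ipi x -> continuity_pt g (f x)) -> contI (fun x => g (f x)).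
Proof.
  intros Hf Hg. apply contI_of_clamp. intros x Hx.
  apply (continuity_pt_comp (fun z => f (clamp z)) g). apply contI_clamp_pt; auto.
  rewrite clamp_id; auto.
Qed.

Lemma contI_sq f : contI f -> contI (fun x => (f x)^2).
Proof. intros Hf. apply (contI_comp f (fun z => z^2)). exact Hf. intros x Hx. apply derivable_continuous_pt. 
  apply ex_derive_Reals_0. auto_derive. auto. Qed.

Lemma RInt_bound_Ipi f B x : contI f -> Ipi x -> (forall y, Ipi y -> Rabs (f y) <= B) ->
  Rabs (RInt f (-PI) x) <= 2 * PI * B.
Proof.
  intros Hf Hx HB. pose proof PI_gt3.
  assert (0 <= B) by (specialize (HB x Hx); pose proof (Rabs_pos (f x)); lra).
  eapply Rle_trans. apply abs_RInt_le_const. unfold Ipi in Hx; lra.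
  apply contI_ex_RInt; auto. unfold Ipi; lra.
  intros t Ht. apply HB. unfold Ipi in *; lra.
  unfold Ipi in Hx. nra.
Qed.

Lemma RInt_minus_Ipi f g lo hi : contI f -> contI g -> Ipi lo -> Ipi hi ->
  RInt f lo hi - RInt g lo hi = RInt (fun y => f y - g y) lo hi.
Proof.
  intros Hf Hg Hl Hh.
  rewrite (RInt_minus (V:=R_CompleteNormedModule) f g) by (apply contI_ex_RInt; auto). reflexivity.
Qed.

Lemma RInt_diff_bound f g e x : contI f -> contI g -> Ipi x ->
  (forall y, Ipi y -> Rabs (f y - g y) <= e) ->
  Rabs (RInt f (-PI) x - RInt g (-PI) x) <= 2 * PI * e.
Proof.
  intros Hf Hg Hx He. pose proof PI_gt3.
  rewrite RInt_minus_Ipi; auto. apply RInt_bound_Ipi; auto. apply contI_minus; auto.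
  unfold Ipi; lra.
Qed.

Definition SOL (a ax at_ : R -> R -> R) : Prop :=
  cont_on_domain a /\ cont_on_domain ax /\
  (forall t, 0 <= t -> RInt (a t) (-PI) PI = 0) /\
  (forall t, 0 <= t -> deriv_on_Ipi (a t) (ax t)) /\
  (forall t x, 0 < t -> Ipi x -> is_derive (fun s => a s x) t (at_ t x)) /\
  (forall t x, 0 < t -> Ipi x ->
       at_ t x + RInt (a t) (- PI) x * ax t x - (a t x) ^ 2
       + / PI * RInt (fun y => (a t y) ^ 2) (- PI) PI = 0).

Definition uu (a : R -> R -> R) t x := RInt (a t) (-PI) x.
Definition cc (a : R -> R -> R) t := / PI * RInt (fun y => (a t y) ^ 2) (- PI) PI.

Lemma at_formula a ax at_ t x : SOL a ax at_ -> 0 < t -> Ipi x ->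
  at_ t x = (a t x)^2 - cc a t - uu a t x * ax t x.
Proof.
  intros (_&_&_&_&_&H) Ht Hx. specialize (H t x Ht Hx). unfold cc, uu. lra.
Qed.

Lemma uu_ends a ax at_ t : SOL a ax at_ -> 0 <= t -> uu a t PI = 0 /\ uu a t (-PI) = 0.
Proof.
  intros (_&_&H&_) Ht. split. apply H; auto. unfold uu. exact (RInt_point (V:=R_CompleteNormedModule) (-PI) (a t)).
Qed.

Lemma deriv_cont F g : deriv_on_Ipi F g -> contI F.
Proof.
  intros HF x Hx eta He.
  destruct (HF x Hx 1 Rlt_0_1) as [d [Hd H]].
  set (d' := Rmin d (eta / (Rabs (g x) + 2))).
  assert (0 < eta / (Rabs (g x) + 2)) by (apply Rdiv_lt_0_compat; [lra|pose proof (Rabs_pos (g x)); lra]).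
  exists d'. split. apply Rmin_pos; auto.
  intros y Hy Hyx.
  assert (Rabs (y - x) < d) by (apply Rlt_le_trans with d'; [exact Hyx|apply Rmin_l]).
  assert (Hyx2 : Rabs (y - x) < eta / (Rabs (g x) + 2)) by (apply Rlt_le_trans with d'; [exact Hyx|apply Rmin_r]).
  destruct (Req_dec y x) as [->|Hne]. unfold Rminus; rewrite Rplus_opp_r, Rabs_R0; lra.
  assert (0 < Rabs (y - x)) by (apply Rabs_pos_lt; lra).
  specialize (H y Hy (conj H2 H1)).
  replace (F y - F x) with (((F y - F x) / (y - x) - g x) * (y - x) + g x * (y - x)) by (field; lra).
  eapply Rle_lt_trans. apply Rabs_triang. rewrite !Rabs_mult.
  assert (Rabs ((F y - F x) / (y - x) - g x) * Rabs (y - x) + Rabs (g x) * Rabs (y - x) <= (Rabs (g x) + 1) * Rabs (y - x)) by nra.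
  eapply Rle_lt_trans. apply H3.
  apply Rmult_lt_compat_l with (r := Rabs (g x) + 2) in Hyx2. 2: pose proof (Rabs_pos (g x)); lra.
  replace ((Rabs (g x) + 2) * (eta / (Rabs (g x) + 2))) with eta in Hyx2 by (field; pose proof (Rabs_pos (g x)); lra).
  nra.
Qed.

Lemma uu_contI a ax at_ t : SOL a ax at_ -> 0 <= t -> contI (uu a t).
Proof.
  intros HS Ht. destruct HS as (Ha&_).
  pose proof (slice_contI a t Ha Ht) as Hc.
  destruct (contI_bound _ Hc) as [B [HB HB']].
  intros x Hx eta He.
  exists (eta / (B + 1)). split. apply Rdiv_lt_0_compat; lra.
  intros y Hy Hyx. unfold uu.
  assert (E : RInt (a t) (-PI) y = RInt (a t) (-PI) x + RInt (a t) x y).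
  { rewrite <- (RInt_Chasles (a t) (-PI) x y) by (apply contI_ex_RInt; auto; unfold Ipi; pose proof PI_gt3; lra).
    reflexivity. }
  rewrite E. unfold Rminus. rewrite (Rplus_comm (RInt (a t) (- PI) x)), Rplus_assoc, Rplus_opp_r, Rplus_0_r.
  assert (Hb : Rabs (RInt (a t) x y) <= B * Rabs (y - x)).
  { destruct (Rle_dec x y).
    - eapply Rle_trans. apply abs_RInt_le_const. auto. apply contI_ex_RInt; auto.
      intros; apply HB'; unfold Ipi in *; lra. rewrite Rabs_right by lra. lra.
    - rewrite <- opp_RInt_swap by (apply contI_ex_RInt; auto).
      change (Rabs (- RInt (a t) y x) <= B * Rabs (y - x)). rewrite Rabs_Ropp.
      eapply Rle_trans. apply abs_RInt_le_const. lra. apply contI_ex_RInt; auto.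
      intros; apply HB'; unfold Ipi in *; lra. rewrite Rabs_left by lra. lra. }
  eapply Rle_lt_trans. apply Hb.
  apply Rle_lt_trans with ((B+1) * Rabs (y - x)). pose proof (Rabs_pos (y - x)). nra.
  apply Rmult_lt_compat_l with (r := B + 1) in Hyx. 2: lra.
  replace ((B + 1) * (eta / (B + 1))) with eta in Hyx by (field; lra). lra.
Qed.


Lemma sol_bounds a ax at_ T : SOL a ax at_ -> 0 <= T -> exists K, 0 <= K /\
  forall s x, 0 <= s <= T -> Ipi x -> Rabs (a s x) <= K /\ Rabs (ax s x) <= K.
Proof.
  intros (Ha&Hax&_) HT.
  destruct (bound_on a Ha T HT) as [K1 [HK1 HK1']].
  destruct (bound_on ax Hax T HT) as [K2 [HK2 HK2']].
  exists (Rmax K1 K2). split. apply Rle_trans with K1; auto; apply Rmax_l.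
  intros s x Hs Hx. split.
  apply Rle_trans with K1; auto; apply Rmax_l. apply Rle_trans with K2; auto; apply Rmax_r.
Qed.

Lemma uu_time a ax at_ t s e x : SOL a ax at_ -> 0 <= t -> 0 <= s -> Ipi x ->
  (forall y, Ipi y -> Rabs (a s y - a t y) <= e) -> Rabs (uu a s x - uu a t x) <= 2 * PI * e.
Proof.
  intros HS Ht Hs Hx He. destruct HS as (Ha&_). unfold uu.
  apply RInt_diff_bound; auto; apply slice_contI; auto.
Qed.

Lemma uu_bound a ax at_ t K x : SOL a ax at_ -> 0 <= t -> Ipi x ->
  (forall y, Ipi y -> Rabs (a t y) <= K) -> Rabs (uu a t x) <= 2 * PI * K.
Proof.
  intros HS Ht Hx HK. destruct HS as (Ha&_). unfold uu.
  apply RInt_bound_Ipi; auto. apply slice_contI; auto.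
Qed.

Lemma cc_time a ax at_ t s e K : SOL a ax at_ -> 0 <= t -> 0 <= s ->
  (forall y, Ipi y -> Rabs (a s y - a t y) <= e) ->
  (forall y, Ipi y -> Rabs (a s y) <= K /\ Rabs (a t y) <= K) ->
  Rabs (cc a s - cc a t) <= 4 * K * e.
Proof.
  intros HS Ht Hs He HK. destruct HS as (Ha&_). unfold cc. pose proof PI_gt3.
  rewrite <- Rmult_minus_distr_l, Rabs_mult, Rabs_right by (left; apply Rinv_0_lt_compat; lra).
  assert (Rabs (RInt (fun y => a s y ^ 2) (- PI) PI - RInt (fun y => a t y ^ 2) (- PI) PI) <= 2 * PI * (2 * K * e)).
  { apply RInt_diff_bound; try (apply contI_sq; apply slice_contI; auto). unfold Ipi; lra.
    intros y Hy. destruct (HK y Hy) as [H1 H2]. specialize (He y Hy).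
    replace (a s y ^ 2 - a t y ^ 2) with ((a s y - a t y) * (a s y + a t y)) by ring.
    rewrite Rabs_mult. 
    assert (Rabs (a s y + a t y) <= 2 * K) by (eapply Rle_trans; [apply Rabs_triang|lra]).
    replace (2 * K * e) with (e * (2 * K)) by ring.
    apply Rmult_le_compat; auto; apply Rabs_pos. }
  apply Rle_trans with (/ PI * (2 * PI * (2 * K * e))).
  apply Rmult_le_compat_l. left; apply Rinv_0_lt_compat; lra. auto.
  right. field. lra.
Qed.

Lemma at_cont a ax at_ t : SOL a ax at_ -> 0 < t -> forall eta, 0 < eta -> exists d, 0 < d /\
  forall s, 0 < s -> Rabs (s - t) < d -> forall x, Ipi x -> Rabs (at_ s x - at_ t x) < eta.
Proof.
  intros HS Ht eta He. pose proof PI_gt3.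
  destruct (sol_bounds a ax at_ (t+1) HS ltac:(lra)) as [K [HK HK']].
  set (e := eta / (30 * K + 30)).
  assert (He0 : 0 < e) by (apply Rdiv_lt_0_compat; lra).
  pose proof HS as (Ha&Hax&HR).
  destruct (slice_unif a Ha t ltac:(lra) e He0) as [d1 [Hd1 Hd1']].
  destruct (slice_unif ax Hax t ltac:(lra) e He0) as [d2 [Hd2 Hd2']].
  exists (Rmin 1 (Rmin d1 d2)). split. repeat apply Rmin_pos; lra.
  intros s Hs Hst x Hx.
  assert (Hs1 : Rabs (s - t) < 1) by (eapply Rlt_le_trans; [exact Hst|apply Rmin_l]).
  assert (Hsd1 : Rabs (s - t) < d1) by (eapply Rlt_le_trans; [exact Hst|eapply Rle_trans; [apply Rmin_r|apply Rmin_l]]).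
  assert (Hsd2 : Rabs (s - t) < d2) by (eapply Rlt_le_trans; [exact Hst|eapply Rle_trans; [apply Rmin_r|apply Rmin_r]]).
  assert (Hz : forall y, Ipi y -> Rabs (y - y) < d1) by (intros; unfold Rminus; rewrite Rplus_opp_r, Rabs_R0; lra).
  assert (Hz2 : forall y, Ipi y -> Rabs (y - y) < d2) by (intros; unfold Rminus; rewrite Rplus_opp_r, Rabs_R0; lra).
  assert (Hae : forall y, Ipi y -> Rabs (a s y - a t y) <= e) by (intros; left; apply Hd1'; auto; lra).
  assert (Haxe : Rabs (ax s x - ax t x) <= e) by (left; apply Hd2'; auto; lra).
  apply Rabs_lt_between in Hs1.
  assert (HKs : forall y, Ipi y -> Rabs (a s y) <= K /\ Rabs (a t y) <= K).
  { intros y Hy. split; apply HK'; auto; lra. }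
  rewrite (at_formula a ax at_ s x HS Hs Hx), (at_formula a ax at_ t x HS Ht Hx).
  pose proof (cc_time a ax at_ t s e K HS ltac:(lra) ltac:(lra) Hae HKs) as Hc.
  pose proof (uu_time a ax at_ t s e x HS ltac:(lra) ltac:(lra) Hx Hae) as Hu.
  assert (Hut : Rabs (uu a t x) <= 2 * PI * K).
  { apply (uu_bound a ax at_); auto; try lra. intros y Hy. apply HK'; auto; lra. }
  destruct (HK' s x ltac:(lra) Hx) as [Has Haxs].
  destruct (HK' t x ltac:(lra) Hx) as [Hat Haxt].
  assert (Hsq : Rabs (a s x ^ 2 - a t x ^ 2) <= 2 * K * e).
  { replace (a s x ^ 2 - a t x ^ 2) with ((a s x - a t x) * (a s x + a t x)) by ring.
    rewrite Rabs_mult. assert (Rabs (a s x + a t x) <= 2 * K) by (eapply Rle_trans; [apply Rabs_triang|lra]).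
    specialize (Hae x Hx). replace (2 * K * e) with (e * (2 * K)) by ring.
    apply Rmult_le_compat; auto; apply Rabs_pos. }
  assert (Hprod : Rabs (uu a s x * ax s x - uu a t x * ax t x) <= 2 * PI * e * K + 2 * PI * K * e).
  { replace (uu a s x * ax s x - uu a t x * ax t x) with
      ((uu a s x - uu a t x) * ax s x + uu a t x * (ax s x - ax t x)) by ring.
    eapply Rle_trans. apply Rabs_triang. rewrite !Rabs_mult.
    apply Rplus_le_compat; apply Rmult_le_compat; auto; apply Rabs_pos. }
  replace (a s x ^ 2 - cc a s - uu a s x * ax s x - (a t x ^ 2 - cc a t - uu a t x * ax t x))
    with ((a s x ^ 2 - a t x ^ 2) - (cc a s - cc a t) - (uu a s x * ax s x - uu a t x * ax t x)) by ring.
  eapply Rle_lt_trans. apply Rabs_triang. rewrite Rabs_Ropp.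
  eapply Rle_lt_trans. apply Rplus_le_compat_r. apply Rabs_triang. rewrite Rabs_Ropp.
  assert (e * (30 * K + 30) = eta) by (unfold e; field; lra).
  assert (PI <= 4) by apply PI_4.
  assert (H4 : PI * (K * e) <= 4 * (K * e)) by (apply Rmult_le_compat_r; [apply Rmult_le_pos; lra|lra]).
  assert (2 * K * e + 4 * K * e + (2 * PI * e * K + 2 * PI * K * e) < eta).
  { replace (2 * K * e + 4 * K * e + (2 * PI * e * K + 2 * PI * K * e)) with (6 * (K * e) + 4 * (PI * (K * e))) by ring.
    nra. }
  lra.
Qed.

Lemma mvt_time a ax at_ t h x : SOL a ax at_ -> 0 < t -> 0 < h -> Ipi x ->
  exists xi, t <= xi <= t + h /\ a (t+h) x - a t x = at_ xi x * h.
Proof.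
  intros HS Ht Hh Hx. destruct HS as (_&_&_&_&Hd&_).
  destruct (MVT_gen (fun s => a s x) t (t+h) (fun s => at_ s x)) as [xi [Hxi Heq]].
  - intros s Hs. rewrite Rmin_left, Rmax_right in Hs by lra. apply Hd; auto; lra.
  - intros s Hs. rewrite Rmin_left, Rmax_right in Hs by lra. apply continuity_pt_filterlim.
    apply (ex_derive_continuous (K:=R_AbsRing) (V:=R_NormedModule) (fun s => a s x)). eexists. apply Hd; auto; lra.
  - rewrite Rmin_left, Rmax_right in Hxi by lra. exists xi. split; auto.
    rewrite Heq. ring.
Qed.

Lemma time_expand a ax at_ t : SOL a ax at_ -> 0 < t -> forall eta, 0 < eta -> exists h0, 0 < h0 /\
  forall h, 0 < h < h0 -> forall x, Ipi x ->
    Rabs (a (t+h) x - a t x - h * at_ t x) <= h * eta /\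
    a (t+h) x - a t x <= h * (at_ (t+h) x + eta).
Proof.
  intros HS Ht eta He.
  destruct (at_cont a ax at_ t HS Ht (eta/2) ltac:(lra)) as [d [Hd Hd']].
  exists d. split; auto. intros h Hh x Hx.
  destruct (mvt_time a ax at_ t h x HS Ht ltac:(lra) Hx) as [xi [Hxi Heq]].
  assert (A1 : Rabs (at_ xi x - at_ t x) < eta/2).
  { apply Hd'; auto. lra. apply Rabs_lt_between; lra. }
  assert (A2 : Rabs (at_ (t+h) x - at_ t x) < eta/2).
  { apply Hd'; auto. lra. apply Rabs_lt_between; lra. }
  rewrite Heq. apply Rabs_lt_between in A1. apply Rabs_lt_between in A2. split.
  - replace (at_ xi x * h - h * at_ t x) with (h * (at_ xi x - at_ t x)) by ring.
    rewrite Rabs_mult, Rabs_right by lra. apply Rmult_le_compat_l. lra.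
    apply Rabs_le_between. lra.
  - nra.
Qed.

Lemma max_fun a ax at_ : SOL a ax at_ -> exists xm : R -> R, forall t, 0 <= t ->
  Ipi (xm t) /\ forall x, Ipi x -> a t x <= a t (xm t).
Proof.
  intros HS.
  assert (G : forall t, exists m, 0 <= t -> Ipi m /\ forall x, Ipi x -> a t x <= a t m).
  { intros t. destruct (Rle_dec 0 t) as [Ht|Ht].
    - destruct (contI_max (a t)) as [m Hm]. destruct HS as (Ha&_). apply slice_contI; auto.
      exists m. intros _. auto.
    - exists 0. intros; contradiction. }
  exists (fun t => proj1_sig (constructive_indefinite_description _ (G t))).
  intros t. exact (proj2_sig (constructive_indefinite_description _ (G t))).
Qed.

Lemma argmax_zero a ax at_ t m : SOL a ax at_ -> 0 <= t -> Ipi m ->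
  (forall x, Ipi x -> a t x <= a t m) -> uu a t m * ax t m = 0.
Proof.
  intros HS Ht Hm Hmax. destruct (uu_ends a ax at_ t HS Ht) as [E1 E2].
  destruct (Req_dec m PI) as [->|H1]. rewrite E1; ring.
  destruct (Req_dec m (-PI)) as [->|H2]. rewrite E2; ring.
  destruct HS as (_&_&_&Hd&_).
  rewrite (fermat_max (a t) (ax t) m (Hd t Ht) Hm Hmax). ring.
  unfold Ipi in Hm. lra.
Qed.

Lemma M_cont a ax at_ (xm : R -> R) t : SOL a ax at_ ->
  (forall t, 0 <= t -> Ipi (xm t) /\ forall x, Ipi x -> a t x <= a t (xm t)) ->
  0 <= t -> forall eta, 0 < eta -> exists d, 0 < d /\ forall s, 0 <= s -> Rabs (s - t) < d ->
  Rabs (a s (xm s) - a t (xm t)) <= eta.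
Proof.
  intros HS Hxm Ht eta He. destruct HS as (Ha&_).
  destruct (slice_unif a Ha t Ht eta He) as [d [Hd Hd']].
  exists d. split; auto. intros s Hs Hst.
  destruct (Hxm s Hs) as [Hs1 Hs2]. destruct (Hxm t Ht) as [Ht1 Ht2].
  assert (Hz : forall y, Rabs (y - y) < d) by (intros; unfold Rminus; rewrite Rplus_opp_r, Rabs_R0; lra).
  pose proof (Hd' s (xm s) (xm s) Hs Hs1 Hs1 Hst (Hz _)).
  pose proof (Hd' s (xm t) (xm t) Hs Ht1 Ht1 Hst (Hz _)).
  pose proof (Hs2 (xm t) Ht1). pose proof (Ht2 (xm s) Hs1).
  apply Rabs_lt_between in H. apply Rabs_lt_between in H0.
  apply Rabs_le_between. lra.
Qed.

Lemma cc_cont a ax at_ t : SOL a ax at_ -> 0 <= t -> forall eta, 0 < eta -> exists d, 0 < d /\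
  forall s, 0 <= s -> Rabs (s - t) < d -> Rabs (cc a s - cc a t) <= eta.
Proof.
  intros HS Ht eta He.
  destruct (sol_bounds a ax at_ (t+1) HS ltac:(lra)) as [K [HK HK']].
  set (e := eta / (4 * K + 1)).
  assert (He0 : 0 < e) by (apply Rdiv_lt_0_compat; lra).
  pose proof HS as (Ha&_).
  destruct (slice_unif a Ha t Ht e He0) as [d1 [Hd1 Hd1']].
  exists (Rmin 1 d1). split. apply Rmin_pos; lra. intros s Hs Hst.
  assert (Hs1 : Rabs (s - t) < 1) by (eapply Rlt_le_trans; [exact Hst|apply Rmin_l]).
  assert (Hsd1 : Rabs (s - t) < d1) by (eapply Rlt_le_trans; [exact Hst|apply Rmin_r]).
  apply Rabs_lt_between in Hs1.
  eapply Rle_trans. apply (cc_time a ax at_ t s e K HS Ht Hs).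
  intros y Hy. left. apply Hd1'; auto. unfold Rminus; rewrite Rplus_opp_r, Rabs_R0; lra.
  intros y Hy. split; apply HK'; auto; lra.
  assert (e * (4 * K + 1) = eta) by (unfold e; field; lra). nra.
Qed.

Lemma danskin a ax at_ (xm : R -> R) t : SOL a ax at_ ->
  (forall t, 0 <= t -> Ipi (xm t) /\ forall x, Ipi x -> a t x <= a t (xm t)) ->
  0 < t -> forall eta, 0 < eta -> exists h0, 0 < h0 /\ forall h, 0 < h < h0 ->
  a (t+h) (xm (t+h)) - a t (xm t) <= h * ((a t (xm t))^2 - cc a t + eta).
Proof.
  intros HS Hxm Ht eta He.
  destruct (sol_bounds a ax at_ (t+1) HS ltac:(lra)) as [K [HK HK']].
  destruct (time_expand a ax at_ t HS Ht (eta/2) ltac:(lra)) as [h1 [Hh1 Hh1']].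
  set (e := eta / (4 * (2*K + 1))).
  assert (He0 : 0 < e) by (apply Rdiv_lt_0_compat; lra).
  destruct (M_cont a ax at_ xm t HS Hxm ltac:(lra) e He0) as [d2 [Hd2 Hd2']].
  destruct (cc_cont a ax at_ t HS ltac:(lra) (eta/4) ltac:(lra)) as [d3 [Hd3 Hd3']].
  exists (Rmin 1 (Rmin h1 (Rmin d2 d3))). split. repeat apply Rmin_pos; lra.
  intros h Hh.
  assert (h < 1) by (eapply Rlt_le_trans; [apply Hh|apply Rmin_l]).
  assert (h < h1) by (eapply Rlt_le_trans; [apply Hh|eapply Rle_trans; [apply Rmin_r|apply Rmin_l]]).
  assert (h < d2) by (eapply Rlt_le_trans; [apply Hh|eapply Rle_trans; [apply Rmin_r|eapply Rle_trans; [apply Rmin_r|apply Rmin_l]]]).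
  assert (h < d3) by (eapply Rlt_le_trans; [apply Hh|eapply Rle_trans; [apply Rmin_r|eapply Rle_trans; [apply Rmin_r|apply Rmin_r]]]).
  destruct (Hxm (t+h) ltac:(lra)) as [Hm1 Hm2]. destruct (Hxm t ltac:(lra)) as [Hm3 Hm4].
  set (xh := xm (t+h)) in *.
  destruct (Hh1' h ltac:(lra) xh Hm1) as [_ Hup].
  pose proof (Hm4 xh Hm1).
  rewrite (at_formula a ax at_ (t+h) xh HS ltac:(lra) Hm1) in Hup.
  rewrite (argmax_zero a ax at_ (t+h) xh HS ltac:(lra) Hm1 Hm2) in Hup.
  assert (HM : Rabs (a (t+h) xh - a t (xm t)) <= e) by (apply Hd2'; [lra|rewrite Rabs_right; lra]).
  assert (HC : Rabs (cc a (t+h) - cc a t) <= eta/4) by (apply Hd3'; [lra|rewrite Rabs_right; lra]).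
  assert (B1 : Rabs (a (t+h) xh) <= K) by (apply HK'; auto; lra).
  assert (B2 : Rabs (a t (xm t)) <= K) by (apply HK'; auto; lra).
  assert (Hsq : a (t+h) xh ^ 2 - a t (xm t) ^2 <= eta / 4).
  { replace (a (t+h) xh ^ 2 - a t (xm t) ^2) with ((a (t+h) xh - a t (xm t)) * (a (t+h) xh + a t (xm t))) by ring.
    eapply Rle_trans. apply Rle_abs. rewrite Rabs_mult.
    assert (Rabs (a (t+h) xh + a t (xm t)) <= 2 * K) by (eapply Rle_trans; [apply Rabs_triang|lra]).
    apply Rle_trans with (e * (2 * K)). apply Rmult_le_compat; auto; apply Rabs_pos.
    assert (e * (4 * (2 * K + 1)) = eta) by (unfold e; field; lra). nra. }
  apply Rabs_le_between in HC.
  assert (a (t + h) xh - a t xh <= h * (a t (xm t) ^ 2 - cc a t + eta)).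
  { eapply Rle_trans. exact Hup. apply Rmult_le_compat_l. lra. lra. }
  lra.
Qed.


Definition Gam (w : R) : R := exp (-(1/4) * ln w).

Lemma Gam_pos w : 0 < Gam w.
Proof. apply exp_pos. Qed.

Lemma ln_le_sub1 y : 0 < y -> ln y <= y - 1.
Proof. intros Hy. pose proof (exp_ineq1_le (ln y)). rewrite exp_ln in H; lra. Qed.

Lemma Gam_convex w1 w2 : 0 < w1 -> 0 < w2 ->
  Gam w2 - Gam w1 >= - Gam w1 / (4 * w1) * (w2 - w1).
Proof.
  intros H1 H2. unfold Gam.
  assert (E : exp (-(1/4) * ln w2) = exp (-(1/4) * ln w1) * exp (-(1/4) * (ln w2 - ln w1))).
  { rewrite <- exp_plus. f_equal. ring. }
  rewrite E.
  assert (Hl : ln w2 - ln w1 <= (w2 - w1) / w1).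
  { rewrite <- ln_div by auto. eapply Rle_trans. apply ln_le_sub1. apply Rdiv_lt_0_compat; auto.
    right. field. lra. }
  pose proof (exp_ineq1_le (-(1/4) * (ln w2 - ln w1))).
  pose proof (exp_pos (-(1/4) * ln w1)).
  set (G1 := exp (-(1/4) * ln w1)) in *.
  assert (G1 * exp (- (1 / 4) * (ln w2 - ln w1)) >= G1 * (1 + - (1 / 4) * (ln w2 - ln w1))).
  { apply Rle_ge, Rmult_le_compat_l; lra. }
  assert (G1 * (1 + - (1 / 4) * (ln w2 - ln w1)) >= G1 * (1 - (1/4) * ((w2 - w1)/w1))).
  { apply Rle_ge, Rmult_le_compat_l; lra. }
  replace (- G1 / (4 * w1) * (w2 - w1)) with (G1 * (1 - (1/4) * ((w2 - w1)/w1)) - G1) by (field; lra).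
  lra.
Qed.

Lemma Gam_mono w1 w2 : 0 < w1 -> w1 <= w2 -> Gam w2 <= Gam w1.
Proof.
  intros H1 H2. unfold Gam. destruct (Req_dec w1 w2) as [->|Hne]. lra.
  left. apply exp_increasing. pose proof (ln_increasing w1 w2 H1 ltac:(lra)). lra.
Qed.

Lemma Gam_inv4 Z : 0 < Z -> Gam (/ (Z^4)) = Z.
Proof.
  intros HZ. unfold Gam. rewrite ln_Rinv by (apply pow_lt; auto).
  rewrite ln_pow by auto. replace (- (1 / 4) * - (INR 4 * ln Z)) with (ln Z) by (simpl; field).
  apply exp_ln; auto.
Qed.

Lemma Gam_derive w : 0 < w -> is_derive Gam w (- Gam w / (4 * w)).
Proof.
  intros Hw. unfold Gam. auto_derive. auto. field. lra.
Qed.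

Lemma Gam_cont w : 0 < w -> continuity_pt Gam w.
Proof.
  intros Hw. apply derivable_continuous_pt. apply ex_derive_Reals_0. eexists. apply Gam_derive; auto.
Qed.

Lemma Gam_lip th w1 w2 : 0 < th -> th <= w1 -> th <= w2 ->
  Rabs (Gam w2 - Gam w1) <= Gam th / (4 * th) * Rabs (w2 - w1).
Proof.
  intros Ht H1 H2.
  pose proof (Gam_convex w1 w2 ltac:(lra) ltac:(lra)).
  pose proof (Gam_convex w2 w1 ltac:(lra) ltac:(lra)).
  assert (L1 : Gam w1 / (4 * w1) <= Gam th / (4 * th)).
  { pose proof (Gam_mono th w1 Ht H1). pose proof (Gam_pos w1). pose proof (Gam_pos th).
    unfold Rdiv. apply Rmult_le_compat; try lra. left; apply Rinv_0_lt_compat; lra.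
    apply Rinv_le_contravar; lra. }
  assert (L2 : Gam w2 / (4 * w2) <= Gam th / (4 * th)).
  { pose proof (Gam_mono th w2 Ht H2). pose proof (Gam_pos w2). pose proof (Gam_pos th).
    unfold Rdiv. apply Rmult_le_compat; try lra. left; apply Rinv_0_lt_compat; lra.
    apply Rinv_le_contravar; lra. }
  assert (0 <= Gam w1 / (4 * w1)) by (pose proof (Gam_pos w1); apply Rlt_le, Rdiv_lt_0_compat; lra).
  assert (0 <= Gam w2 / (4 * w2)) by (pose proof (Gam_pos w2); apply Rlt_le, Rdiv_lt_0_compat; lra).
  unfold Rdiv in *.
  apply Rabs_le_between. split_Rabs; nra.
Qed.

Definition phiE (M A th : R) : R :=
  - Gam (M + th - A) / (4 * (M + th - A)) * (M^2 - A^2) + A * Gam (M + th - A).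

Lemma phi_bound1 M A th K : 0 < th -> A <= M -> Rabs A <= K -> Rabs M <= K ->
  phiE M A th >= - (3 * K + 1) * Gam (M + th - A).
Proof.
  intros Ht HAM HA HM. unfold phiE. set (W := M + th - A).
  pose proof (Gam_pos W). set (G := Gam W) in *.
  assert (HW : 0 < W) by (unfold W; lra).
  apply Rabs_le_between in HA. apply Rabs_le_between in HM.
  assert (Hq : (M - A) * (M + A) / (4 * W) <= K / 2 + K / 2).
  { apply Rle_trans with ((M - A) * (2 * K) / (4 * W)).
    unfold Rdiv. apply Rmult_le_compat_r. left; apply Rinv_0_lt_compat; lra. nra.
    replace ((M - A) * (2 * K) / (4 * W)) with (K / 2 * ((M - A) / W)) by (field; lra).
    assert ((M - A) / W <= 1). { apply Rmult_le_reg_r with W; auto. unfold Rdiv.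
      rewrite Rmult_assoc, Rinv_l by lra. unfold W. lra. }
    assert (0 <= K) by lra. nra. }
  replace (- G / (4 * W) * (M ^ 2 - A ^ 2) + A * G) with (G * (A - (M - A) * (M + A) / (4 * W))) by (field; lra).
  nra.
Qed.

Lemma phi_bound2 M A th L : 0 < th -> 0 < L -> A <= M -> L - L/8 <= M <= L + L/8 ->
  Rabs A <= L + L/8 ->
  phiE M A th >= L/4 * Gam (M + th - A) - (L/4 + 3 * (L + L/8) + 1) * Gam (L/8).
Proof.
  intros Ht HL HAM HM HA. 
  destruct (Rle_dec (3*L/4) A) as [Hbig|Hsmall].
  - unfold phiE. set (W := M + th - A). pose proof (Gam_pos W). set (G := Gam W) in *.
    assert (HW : 0 < W) by (unfold W; lra).
    pose proof (Gam_pos (L/8)).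
    assert (Hq : (M - A) * (M + A) / (4 * W) <= (M + A) / 4).
    { replace ((M - A) * (M + A) / (4 * W)) with ((M + A) / 4 * ((M - A) / W)) by (field; lra).
      assert ((M - A) / W <= 1). { apply Rmult_le_reg_r with W; auto. unfold Rdiv.
        rewrite Rmult_assoc, Rinv_l by lra. unfold W. lra. }
      assert (0 <= (M - A) / W). { apply Rmult_le_pos; try lra. left; apply Rinv_0_lt_compat; lra. }
      nra. }
    replace (- G / (4 * W) * (M ^ 2 - A ^ 2) + A * G) with (G * (A - (M - A) * (M + A) / (4 * W))) by (field; lra).
    assert (A - (M - A) * (M + A) / (4 * W) >= L / 4) by lra.
    assert (0 <= (L / 4 + 3 * (L + L / 8) + 1) * Gam (L / 8)) by (apply Rmult_le_pos; lra).
    nra.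
  - pose proof (phi_bound1 M A th (L + L/8) Ht HAM HA ltac:(rewrite Rabs_right; lra)).
    assert (HW : L / 8 <= M + th - A) by lra.
    pose proof (Gam_mono (L/8) (M + th - A) ltac:(lra) HW).
    pose proof (Gam_pos (M + th - A)). nra.
Qed.


Lemma RI_plus f g : contI f -> contI g ->
  RInt (fun x => f x + g x) (-PI) PI = RInt f (-PI) PI + RInt g (-PI) PI.
Proof.
  intros Hf Hg. pose proof PI_gt3.
  rewrite (RInt_plus (V:=R_CompleteNormedModule) f g) by (apply contI_ex_RInt; auto; unfold Ipi; lra).
  reflexivity.
Qed.

Lemma RI_opp f : contI f -> RInt (fun x => - f x) (-PI) PI = - RInt f (-PI) PI.
Proof.
  intros Hf. pose proof PI_gt3.
  rewrite (RInt_opp (V:=R_CompleteNormedModule) f) by (apply contI_ex_RInt; auto; unfold Ipi; lra).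
  reflexivity.
Qed.

Lemma RI_scal c f : contI f -> RInt (fun x => c * f x) (-PI) PI = c * RInt f (-PI) PI.
Proof.
  intros Hf. pose proof PI_gt3.
  rewrite (RInt_scal (V:=R_CompleteNormedModule) f) by (apply contI_ex_RInt; auto; unfold Ipi; lra).
  reflexivity.
Qed.

Lemma RI_const c : RInt (fun _ => c) (-PI) PI = 2 * PI * c.
Proof.
  rewrite (RInt_const (V:=R_CompleteNormedModule)). change ((PI - - PI) * c = 2 * PI * c :> R). ring.
Qed.

Lemma RI_ext (f g : R -> R) : (forall x, Ipi x -> f x = g x) -> RInt f (-PI) PI = RInt g (-PI) PI.
Proof.
  intros H. apply RInt_ext. intros x Hx. rewrite Rmin_left, Rmax_right in Hx by (pose proof PI_gt3; lra).
  apply H. unfold Ipi; lra.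
Qed.

Lemma RI_le f g : contI f -> contI g -> (forall x, Ipi x -> f x <= g x) ->
  RInt f (-PI) PI <= RInt g (-PI) PI.
Proof.
  intros Hf Hg H. pose proof PI_gt3. apply RInt_le. lra.
  apply contI_ex_RInt; auto; unfold Ipi; lra. apply contI_ex_RInt; auto; unfold Ipi; lra.
  intros x Hx. apply H. unfold Ipi; lra.
Qed.

Lemma deriv_interior F g x : deriv_on_Ipi F g -> -PI < x < PI -> is_derive F x (g x).
Proof.
  intros HF Hx. apply is_derive_Reals. intros eps He.
  destruct (HF x ltac:(unfold Ipi; lra) (eps/2) ltac:(lra)) as [d [Hd H]].
  assert (Hm : 0 < Rmin d (Rmin (x + PI) (PI - x))) by (repeat apply Rmin_pos; lra).
  exists (mkposreal _ Hm). intros h Hh Hhd. simpl in Hhd.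
  pose proof (Rmin_l d (Rmin (x + PI) (PI - x))). pose proof (Rmin_r d (Rmin (x + PI) (PI - x))).
  pose proof (Rmin_l (x + PI) (PI - x)). pose proof (Rmin_r (x + PI) (PI - x)).
  apply Rabs_lt_between in Hhd as Hb.
  specialize (H (x + h) ltac:(unfold Ipi; lra)).
  replace (x + h - x) with h in H by ring.
  assert (0 < Rabs h) by (apply Rabs_pos_lt; auto).
  specialize (H ltac:(split; lra)). lra.
Qed.

Definition XM (a : R -> R -> R) (xm : R -> R) : Prop :=
  forall t, 0 <= t -> Ipi (xm t) /\ forall x, Ipi x -> a t x <= a t (xm t).

Definition WW (a : R -> R -> R) xm th t x := a t (xm t) + th - a t x.
Definition II (a : R -> R -> R) xm th t := RInt (fun x => Gam (WW a xm th t x)) (-PI) PI.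
Definition gp (w : R) := - Gam w / (4 * w).

Lemma WW_ge a xm th t x : XM a xm -> 0 <= t -> Ipi x -> th <= WW a xm th t x.
Proof. intros H Ht Hx. destruct (H t Ht) as [_ H2]. specialize (H2 x Hx). unfold WW. lra. Qed.

Lemma gp_cont w : 0 < w -> continuity_pt gp w.
Proof.
  intros Hw. apply derivable_continuous_pt. apply ex_derive_Reals_0. unfold gp, Gam. auto_derive. lra.
Qed.

Lemma WW_contI a ax at_ xm th t : SOL a ax at_ -> 0 <= t -> contI (WW a xm th t).
Proof.
  intros (Ha&_) Ht. unfold WW. apply (contI_minus (fun _ => a t (xm t) + th) (a t)).
  apply contI_const. apply slice_contI; auto.
Qed.

Lemma GW_contI a ax at_ xm th t : SOL a ax at_ -> XM a xm -> 0 < th -> 0 <= t ->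
  contI (fun x => Gam (WW a xm th t x)).
Proof.
  intros HS HX Hth Ht. apply (contI_comp (WW a xm th t) Gam). eapply WW_contI; eauto.
  intros x Hx. apply Gam_cont. pose proof (WW_ge a xm th t x HX Ht Hx). lra.
Qed.

Lemma gpW_contI a ax at_ xm th t : SOL a ax at_ -> XM a xm -> 0 < th -> 0 <= t ->
  contI (fun x => gp (WW a xm th t x)).
Proof.
  intros HS HX Hth Ht. apply (contI_comp (WW a xm th t) gp). eapply WW_contI; eauto.
  intros x Hx. apply gp_cont. pose proof (WW_ge a xm th t x HX Ht Hx). lra.
Qed.

Lemma gp_bound th w : 0 < th -> th <= w -> - (Gam th / (4 * th)) <= gp w <= 0.
Proof.
  intros Ht Hw. unfold gp. pose proof (Gam_mono th w Ht Hw). pose proof (Gam_pos w).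
  split.
  - assert (Gam w / (4 * w) <= Gam th / (4 * th)).
    { unfold Rdiv. apply Rmult_le_compat; try lra. left; apply Rinv_0_lt_compat; lra.
      apply Rinv_le_contravar; lra. }
    unfold Rdiv in *. lra.
  - unfold Rdiv. rewrite Ropp_mult_distr_l_reverse. 
    assert (0 < Gam w * / (4 * w)) by (apply Rmult_lt_0_compat; auto; apply Rinv_0_lt_compat; lra). lra.
Qed.

Lemma ibp a ax at_ xm th t : SOL a ax at_ -> XM a xm -> 0 < th -> 0 <= t ->
  RInt (fun x => gp (WW a xm th t x) * uu a t x * ax t x) (-PI) PI =
  RInt (fun x => a t x * Gam (WW a xm th t x)) (-PI) PI.
Proof.
  intros HS HX Hth Ht. pose proof PI_gt3.
  pose proof HS as (Ha&Hax&HR&Hd&_).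
  assert (Cu := uu_contI a ax at_ t HS Ht).
  assert (Ca := slice_contI a t Ha Ht).
  assert (Cax := slice_contI ax t Hax Ht).
  assert (CG := GW_contI a ax at_ xm th t HS HX Hth Ht).
  assert (Cg := gpW_contI a ax at_ xm th t HS HX Hth Ht).
  set (F := fun x => uu a t x * Gam (WW a xm th t x)).
  set (f := fun x => a t x * Gam (WW a xm th t x) + uu a t x * (gp (WW a xm th t x) * - ax t x)).
  assert (Cf1 : contI (fun x => a t x * Gam (WW a xm th t x))) by (apply contI_mult; auto).
  assert (Cf2 : contI (fun x => uu a t x * (gp (WW a xm th t x) * - ax t x))).
  { apply contI_mult; auto. apply contI_mult; auto.
    apply (contI_minus (fun _ => 0) (ax t)) || idtac.
    intros x Hx eta He. destruct (Cax x Hx eta He) as [d [Hd0 Hd1]]. exists d. split; auto.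
    intros y Hy Hyx. specialize (Hd1 y Hy Hyx). replace (- ax t y - - ax t x) with (- (ax t y - ax t x)) by ring.
    rewrite Rabs_Ropp. auto. }
  assert (Hftc : RInt f (-PI) PI = F PI - F (-PI)).
  { apply ftc_Ipi.
    - unfold F. apply contI_mult; auto.
    - unfold f. apply contI_plus; auto.
    - intros x Hx. unfold F, f.
      assert (Hw : 0 < WW a xm th t x) by (pose proof (WW_ge a xm th t x HX Ht ltac:(unfold Ipi; lra)); lra).
      assert (D1 : is_derive (uu a t) x (a t x)).
      { unfold uu. apply (is_derive_RInt (V:=R_NormedModule) (a t) (fun b => RInt (a t) (-PI) b) (-PI) x).
        * assert (Hm : 0 < Rmin (x + PI) (PI - x)) by (apply Rmin_pos; lra).
          exists (mkposreal _ Hm). intros y Hy. change (Rabs (y - x) < Rmin (x + PI) (PI - x)) in Hy.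
          pose proof (Rmin_l (x + PI) (PI - x)). pose proof (Rmin_r (x + PI) (PI - x)).
          apply Rabs_lt_between in Hy.
          apply (RInt_correct (V:=R_CompleteNormedModule)). apply contI_ex_RInt; auto; unfold Ipi; lra.
        * apply continuity_pt_filterlim. apply contI_interior; auto. }
      assert (DW : is_derive (WW a xm th t) x (0 - ax t x)).
      { unfold WW. apply (is_derive_minus (K:=R_AbsRing) (V:=R_NormedModule) (fun _ => a t (xm t) + th) (a t)).
        apply (is_derive_const (K:=R_AbsRing) (V:=R_NormedModule)). apply deriv_interior; auto. }
      pose proof (is_derive_comp (K:=R_AbsRing) (V:=R_NormedModule) Gam (WW a xm th t) x _ _ (Gam_derive _ Hw) DW) as D2.
      pose proof (is_derive_mult (K:=R_AbsRing) (uu a t) (fun y => Gam (WW a xm th t y)) x _ _ D1 D2 ltac:(intros; apply Rmult_comm)) as D3.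
      match type of D3 with is_derive _ _ ?l =>
        replace (a t x * Gam (WW a xm th t x) + uu a t x * (gp (WW a xm th t x) * - ax t x)) with l end.
      exact D3.
      change ((a t x) * (Gam (WW a xm th t x)) + (uu a t x) * ((0 - ax t x) * (- Gam (WW a xm th t x) / (4 * WW a xm th t x)))
          = a t x * Gam (WW a xm th t x) + uu a t x * (gp (WW a xm th t x) * - ax t x)).
      unfold gp. ring. }
  assert (HF0 : F PI - F (-PI) = 0).
  { unfold F. destruct (uu_ends a ax at_ t HS Ht) as [E1 E2]. rewrite E1, E2. ring. }
  unfold f in Hftc. rewrite RI_plus in Hftc by auto.
  assert (E : RInt (fun x => uu a t x * (gp (WW a xm th t x) * - ax t x)) (-PI) PI =
              - RInt (fun x => gp (WW a xm th t x) * uu a t x * ax t x) (-PI) PI).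
  { rewrite <- RI_opp. apply RI_ext. intros; ring.
    apply contI_mult; auto. apply contI_mult; auto. }
  rewrite E in Hftc. lra.
Qed.


Lemma phiE_cont M th A : 0 < M + th - A -> continuity_pt (fun A => phiE M A th) A.
Proof.
  intros H. apply derivable_continuous_pt. apply ex_derive_Reals_0. unfold phiE, Gam.
  auto_derive. repeat split; lra.
Qed.

Lemma phi_contI a ax at_ xm th t : SOL a ax at_ -> XM a xm -> 0 < th -> 0 <= t ->
  contI (fun x => phiE (a t (xm t)) (a t x) th).
Proof.
  intros HS HX Hth Ht. pose proof HS as (Ha&_).
  apply (contI_comp (a t) (fun A => phiE (a t (xm t)) A th)). apply slice_contI; auto.
  intros x Hx. apply phiE_cont. pose proof (WW_ge a xm th t x HX Ht Hx). unfold WW in H. lra.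
Qed.

Lemma II_cont a ax at_ xm th t : SOL a ax at_ -> XM a xm -> 0 < th -> 0 <= t ->
  forall eta, 0 < eta -> exists d, 0 < d /\ forall s, 0 <= s -> Rabs (s - t) < d ->
  Rabs (II a xm th s - II a xm th t) < eta.
Proof.
  intros HS HX Hth Ht eta He. pose proof PI_gt3. pose proof HS as (Ha&_).
  set (Lt := Gam th / (4 * th)).
  assert (HLt : 0 < Lt) by (apply Rdiv_lt_0_compat; [apply Gam_pos|lra]).
  set (e := eta / (8 * PI * (Lt + 1))).
  assert (He0 : 0 < e) by (apply Rdiv_lt_0_compat; nra).
  destruct (slice_unif a Ha t Ht e He0) as [d1 [Hd1 Hd1']].
  destruct (M_cont a ax at_ xm t HS HX Ht e He0) as [d2 [Hd2 Hd2']].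
  exists (Rmin d1 d2). split. apply Rmin_pos; auto. intros s Hs Hst.
  assert (Rabs (s - t) < d1) by (eapply Rlt_le_trans; [exact Hst|apply Rmin_l]).
  assert (Rabs (s - t) < d2) by (eapply Rlt_le_trans; [exact Hst|apply Rmin_r]).
  unfold II. eapply Rle_lt_trans.
  apply (RInt_diff_bound _ _ (Lt * (2 * e)) PI).
  apply (GW_contI a ax at_ xm th s); auto. apply (GW_contI a ax at_ xm th t); auto. unfold Ipi; lra.
  - intros y Hy. eapply Rle_trans. apply (Gam_lip th); auto.
    apply WW_ge; auto. apply WW_ge; auto.
    fold Lt. apply Rmult_le_compat_l. lra.
    unfold WW. specialize (Hd2' s Hs H1).
    assert (Rabs (a s y - a t y) < e) by (apply Hd1'; auto; unfold Rminus; rewrite Rplus_opp_r, Rabs_R0; lra).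
    replace (a s (xm s) + th - a s y - (a t (xm t) + th - a t y)) with
      ((a s (xm s) - a t (xm t)) - (a s y - a t y)) by ring.
    eapply Rle_trans. apply Rabs_triang. rewrite Rabs_Ropp. lra.
  - assert (e * (8 * PI * (Lt + 1)) = eta) by (unfold e; field; nra).
    assert (2 * PI * (Lt * (2 * e)) = (4 * PI * Lt) * e) by ring.
    assert (4 * PI * Lt * e < 8 * PI * (Lt + 1) * e) by (apply Rmult_lt_compat_r; nra).
    nra.
Qed.

Lemma II_contOn a ax at_ xm th lo hi : SOL a ax at_ -> XM a xm -> 0 < th -> 0 <= lo ->
  contOn (II a xm th) lo hi.
Proof.
  intros HS HX Hth Hlo t Ht eps He.
  destruct (II_cont a ax at_ xm th t HS HX Hth ltac:(lra) eps He) as [d [Hd Hd']].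
  exists d. split; auto. intros s Hs Hst. apply Hd'; auto. lra.
Qed.

Lemma II_upper a ax at_ xm th t : SOL a ax at_ -> XM a xm -> 0 < th -> 0 <= t ->
  II a xm th t <= 2 * PI * Gam th.
Proof.
  intros HS HX Hth Ht. pose proof PI_gt3. unfold II.
  eapply Rle_trans. apply Rle_abs. apply RInt_bound_Ipi.
  apply (GW_contI a ax at_ xm th t); auto. unfold Ipi; lra.
  intros y Hy. rewrite Rabs_right by (left; apply Gam_pos). apply Gam_mono; auto.
  apply WW_ge; auto.
Qed.

Lemma II_dini a ax at_ xm th t : SOL a ax at_ -> XM a xm -> 0 < th -> 0 < t ->
  forall eps, 0 < eps -> exists h0, 0 < h0 /\ forall h, 0 < h < h0 ->
  II a xm th (t+h) - II a xm th t >=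
    h * (RInt (fun x => phiE (a t (xm t)) (a t x) th) (-PI) PI - eps).
Proof.
  intros HS HX Hth Ht eps He. pose proof PI_gt3. pose proof HS as (Ha&Hax&_).
  set (Lt := Gam th / (4 * th)).
  assert (HLt : 0 < Lt) by (apply Rdiv_lt_0_compat; [apply Gam_pos|lra]).
  set (eta := eps / (4 * PI * Lt + 1)).
  assert (He0 : 0 < eta) by (apply Rdiv_lt_0_compat; nra).
  destruct (danskin a ax at_ xm t HS HX Ht eta He0) as [h1 [Hh1 Hh1']].
  destruct (time_expand a ax at_ t HS Ht eta He0) as [h2 [Hh2 Hh2']].
  exists (Rmin h1 h2). split. apply Rmin_pos; auto. intros h Hh.
  assert (h < h1) by (eapply Rlt_le_trans; [apply Hh|apply Rmin_l]).
  assert (h < h2) by (eapply Rlt_le_trans; [apply Hh|apply Rmin_r]).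
  specialize (Hh1' h ltac:(lra)).
  set (M := a t (xm t)) in *.
  assert (CG1 := GW_contI a ax at_ xm th t HS HX Hth ltac:(lra)).
  assert (CG2 := GW_contI a ax at_ xm th (t+h) HS HX Hth ltac:(lra)).
  assert (Cg := gpW_contI a ax at_ xm th t HS HX Hth ltac:(lra)).
  assert (Cu := uu_contI a ax at_ t HS ltac:(lra)).
  assert (Ca := slice_contI a t Ha ltac:(lra)).
  assert (Cax := slice_contI ax t Hax ltac:(lra)).
  set (psi1 := fun x => gp (WW a xm th t x) * (M^2 - (a t x)^2)).
  set (psi2 := fun x => gp (WW a xm th t x) * uu a t x * ax t x).
  assert (Cp1 : contI psi1).
  { unfold psi1. apply contI_mult; auto. apply (contI_minus (fun _ => M^2) (fun x => a t x ^ 2)).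
    apply contI_const. apply contI_sq; auto. }
  assert (Cp2 : contI psi2) by (unfold psi2; apply contI_mult; auto; apply contI_mult; auto).
  assert (Hpt : forall x, Ipi x ->
     h * (psi1 x + psi2 x - 2 * eta * Lt) <= Gam (WW a xm th (t+h) x) - Gam (WW a xm th t x)).
  { intros x Hx.
    pose proof (WW_ge a xm th t x HX ltac:(lra) Hx) as W1.
    pose proof (WW_ge a xm th (t+h) x HX ltac:(lra) Hx) as W2.
    pose proof (Gam_convex _ _ (Rlt_le_trans _ _ _ Hth W1) (Rlt_le_trans _ _ _ Hth W2)) as Cv.
    fold (gp (WW a xm th t x)) in Cv. 
    destruct (Hh2' h ltac:(lra) x Hx) as [Ex _].
    apply Rabs_le_between in Ex.
    rewrite (at_formula a ax at_ t x HS Ht Hx) in Ex.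
    pose proof (gp_bound th (WW a xm th t x) Hth W1) as [g1 g2].
    fold Lt in g1.
    assert (Hd : WW a xm th (t+h) x - WW a xm th t x <= h * (M^2 - a t x ^ 2 + uu a t x * ax t x + 2 * eta)).
    { unfold WW. fold M. nra. }
    unfold psi1, psi2.
    set (g := gp (WW a xm th t x)) in *.
    assert (g * (WW a xm th (t + h) x - WW a xm th t x) >= g * (h * (M ^ 2 - a t x ^ 2 + uu a t x * ax t x + 2 * eta))).
    { apply Rle_ge. apply Rmult_le_compat_neg_l; auto. }
    assert (h * (2 * eta) * g >= - (h * (2 * eta) * Lt)).
    { assert (0 <= h * (2 * eta)) by nra. nra. }
    nra. }
  unfold II. rewrite RInt_minus_Ipi by (auto; unfold Ipi; lra).
  assert (Hl : RInt (fun x => h * (psi1 x + psi2 x - 2 * eta * Lt)) (-PI) PI <=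
     RInt (fun y => Gam (WW a xm th (t + h) y) - Gam (WW a xm th t y)) (-PI) PI).
  { apply RI_le; auto.
    - apply contI_mult. apply contI_const. apply contI_minus. apply contI_plus; auto. apply contI_const.
    - apply contI_minus; auto. }
  rewrite RI_scal in Hl.
  2: { apply contI_minus. apply contI_plus; auto. apply contI_const. }
  rewrite (RI_ext (fun x => psi1 x + psi2 x - 2 * eta * Lt) (fun x => psi1 x + psi2 x + (- (2 * eta * Lt)))) in Hl
    by (intros; ring).
  rewrite RI_plus in Hl. 2: apply contI_plus; auto. 2: apply contI_const.
  rewrite RI_plus in Hl by auto. rewrite RI_const in Hl.
  assert (Hib : RInt psi2 (-PI) PI = RInt (fun x => a t x * Gam (WW a xm th t x)) (-PI) PI).
  { unfold psi2. apply (ibp a ax at_ xm th t); auto. lra. }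
  assert (Hphi : RInt (fun x => phiE M (a t x) th) (-PI) PI = RInt psi1 (-PI) PI + RInt psi2 (-PI) PI).
  { rewrite Hib. rewrite <- RI_plus by (auto; apply contI_mult; auto).
    apply RI_ext. intros x Hx. unfold phiE, psi1, gp, WW. fold M. ring. }
  rewrite Hphi.
  assert (2 * PI * - (2 * eta * Lt) >= - eps).
  { assert (eta * (4 * PI * Lt + 1) = eps) by (unfold eta; field; nra).
    assert (0 < eta) by auto. nra. }
  apply Rle_ge. eapply Rle_trans. 2: exact Hl.
  apply Rmult_le_compat_l. lra. lra.
Qed.


Lemma RInt_nonneg f lo hi : lo <= hi -> contI f -> Ipi lo -> Ipi hi ->
  (forall x, lo <= x <= hi -> 0 <= f x) -> 0 <= RInt f lo hi.
Proof.
  intros Hlh Hf Hl Hh H.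
  assert (E : RInt (fun _ => 0) lo hi = 0).
  { rewrite (RInt_const (V:=R_CompleteNormedModule)). change ((hi - lo) * 0 = 0 :> R). ring. }
  rewrite <- E. apply RInt_le; auto.
  apply (ex_RInt_const (V:=R_CompleteNormedModule)). apply contI_ex_RInt; auto.
  intros; apply H; lra.
Qed.

Lemma main_contra a ax at_ a0 mu P del :
  SOL a ax at_ -> (forall x, Ipi x -> a 0 x = a0 x) -> (forall x, Ipi x -> a0 x <= P) ->
  (forall x, -del <= x <= del -> a0 x = P) -> 0 < del < PI -> mu <> 0 ->
  converges_to_mu_cos a mu -> False.
Proof.
  intros HS Ha0 HP Hplat Hdel Hmu Hconv. pose proof PI_gt3.
  set (L := Rabs mu). assert (HL : 0 < L) by (apply Rabs_pos_lt; auto).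
  destruct (Hconv (L/8) ltac:(lra)) as [T0 HT0].
  set (T := Rmax T0 1). assert (HT1 : 1 <= T) by apply Rmax_r. assert (HT0' : T0 <= T) by apply Rmax_l.
  destruct (max_fun a ax at_ HS) as [xm HX].
  assert (Late : forall t, T <= t -> (forall x, Ipi x -> Rabs (a t x) <= L + L/8) /\
                   L - L/8 <= a t (xm t) <= L + L/8).
  { intros t Ht.
    assert (Hb : forall x, Ipi x -> Rabs (a t x - mu * cos x) <= L/8) by (intros; apply HT0; auto; lra).
    assert (Hc : forall x, Rabs (mu * cos x) <= L).
    { intros x. rewrite Rabs_mult. pose proof (COS_bound x). unfold L.
      assert (Rabs (cos x) <= 1) by (apply Rabs_le; lra). pose proof (Rabs_pos mu). nra. }
    destruct (HX t ltac:(lra)) as [Hm1 Hm2].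
    split.
    - intros x Hx. specialize (Hb x Hx). specialize (Hc x).
      replace (a t x) with ((a t x - mu * cos x) + mu * cos x) by ring.
      eapply Rle_trans. apply Rabs_triang. lra.
    - split.
      + destruct (Rlt_or_le 0 mu) as [Hp|Hn].
        * assert (I0 : Ipi 0) by (unfold Ipi; lra).
          specialize (Hb 0 I0). rewrite cos_0, Rmult_1_r in Hb. apply Rabs_le_between in Hb.
          pose proof (Hm2 0 I0). unfold L in *. rewrite Rabs_right in * by lra. lra.
        * assert (I0 : Ipi PI) by (unfold Ipi; lra).
          specialize (Hb PI I0). rewrite cos_PI in Hb. apply Rabs_le_between in Hb.
          pose proof (Hm2 PI I0). unfold L in *. rewrite Rabs_left in * by lra. lra.
      + specialize (Hb (xm t) Hm1). specialize (Hc (xm t)).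
        apply Rabs_le_between in Hb. apply Rabs_le_between in Hc. lra. }
  destruct (sol_bounds a ax at_ T HS ltac:(lra)) as [K [HK HK']].
  set (C := (L/4 + 3 * (L + L/8) + 1) * Gam (L/8)).
  assert (HC : 0 <= C) by (unfold C; apply Rmult_le_pos; [lra|left; apply Gam_pos]).
  set (Q := 2 * PI * C / (L/4)).
  assert (HQ : 0 <= Q) by (unfold Q; apply Rmult_le_pos; [nra|left; apply Rinv_0_lt_compat; lra]).
  set (l1 := 3 * K + 1).
  set (Z := (Q + 1) * exp (l1 * T) / (2 * del) + 1).
  assert (HZ : 0 < Z).
  { unfold Z. assert (0 < (Q + 1) * exp (l1 * T) / (2 * del)).
    { apply Rdiv_lt_0_compat. apply Rmult_lt_0_compat. lra. apply exp_pos. lra. } lra. }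
  set (th := / (Z^4)).
  assert (Hth : 0 < th) by (apply Rinv_0_lt_compat; apply pow_lt; auto).
  assert (HGth : Gam th = Z) by (apply Gam_inv4; auto).
  set (I := II a xm th).
  assert (HI0 : 2 * del * Z <= I 0).
  { destruct (HX 0 (Rle_refl 0)) as [Hm1 Hm2].
    assert (HM0 : a 0 (xm 0) = P).
    { apply Rle_antisym. rewrite Ha0 by auto. apply HP; auto.
      assert (I0 : Ipi 0) by (unfold Ipi; lra). pose proof (Hm2 0 I0).
      rewrite (Ha0 0 I0), (Hplat 0 ltac:(lra)) in H0. lra. }
    unfold I, II.
    assert (CG := GW_contI a ax at_ xm th 0 HS HX Hth (Rle_refl 0)).
    rewrite (RInt_split3 _ (-PI) (-del) del PI) by (auto; unfold Ipi; lra).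
    assert (Hmid : RInt (fun x => Gam (WW a xm th 0 x)) (- del) del = 2 * del * Z).
    { rewrite (RInt_ext _ (fun _ => Z)).
      rewrite (RInt_const (V:=R_CompleteNormedModule)). change ((del - - del) * Z = 2 * del * Z :> R). ring.
      intros x Hx. rewrite Rmin_left, Rmax_right in Hx by lra.
      unfold WW. rewrite HM0, Ha0 by (unfold Ipi; lra). rewrite Hplat by lra.
      replace (P + th - P) with th by ring. auto. }
    rewrite Hmid.
    assert (0 <= RInt (fun x => Gam (WW a xm th 0 x)) (- PI) (- del)).
    { apply RInt_nonneg; auto; try (unfold Ipi; lra). intros; left; apply Gam_pos. }
    assert (0 <= RInt (fun x => Gam (WW a xm th 0 x)) del PI).
    { apply RInt_nonneg; auto; try (unfold Ipi; lra). intros; left; apply Gam_pos. }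
    lra. }
  (* Gronwall on [0,T] *)
  assert (HIT : I 0 <= I T * exp (l1 * T)).
  { pose proof (dini_exp I 0 T (- l1) 0 ltac:(lra) ltac:(unfold l1; lra)
      (II_contOn a ax at_ xm th 0 T HS HX Hth (Rle_refl 0))) as Hg.
    replace (0 / - l1) with 0 in Hg by (field; unfold l1; lra).
    rewrite !Rplus_0_r in Hg. replace (- - l1 * 0) with 0 in Hg by ring. rewrite exp_0, Rmult_1_r in Hg.
    replace (- - l1 * T) with (l1 * T) in Hg by ring. apply Hg.
    intros t Ht eps He.
    destruct (II_dini a ax at_ xm th t HS HX Hth ltac:(lra) eps He) as [h0 [Hh0 Hh0']].
    exists h0. split; auto. intros h Hh. specialize (Hh0' h Hh).
    assert (Hphi : - l1 * I t <= RInt (fun x => phiE (a t (xm t)) (a t x) th) (- PI) PI).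
    { unfold I, II. rewrite <- RI_scal by (apply (GW_contI a ax at_ xm th t); auto; lra).
      apply RI_le. apply contI_mult. apply contI_const. apply (GW_contI a ax at_ xm th t); auto; lra.
      apply (phi_contI a ax at_ xm th t); auto; lra.
      intros x Hx. destruct (HX t ltac:(lra)) as [Hm1 Hm2].
      pose proof (phi_bound1 (a t (xm t)) (a t x) th K Hth (Hm2 x Hx)
         (proj1 (HK' t x ltac:(lra) Hx)) (proj1 (HK' t (xm t) ltac:(lra) Hm1))).
      unfold WW. unfold l1. lra. }
    fold I in Hh0'. nra. }
  assert (HIT2 : Q + 1 <= I T).
  { assert (Q + 1 <= 2 * del * Z / exp (l1 * T)).
    { apply Rmult_le_reg_r with (exp (l1 * T)). apply exp_pos.
      unfold Rdiv. rewrite Rmult_assoc, Rinv_l by (apply Rgt_not_eq, exp_pos).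
      unfold Z. rewrite Rmult_1_r.
      replace (2 * del * ((Q + 1) * exp (l1 * T) / (2 * del) + 1)) with ((Q + 1) * exp (l1 * T) + 2 * del) by (field; lra).
      lra. }
    assert (2 * del * Z / exp (l1 * T) <= I T).
    { apply Rmult_le_reg_r with (exp (l1 * T)). apply exp_pos.
      unfold Rdiv. rewrite Rmult_assoc, Rinv_l by (apply Rgt_not_eq, exp_pos). lra. }
    lra. }
  set (b := T + 8 * PI * Z / L).
  assert (Hb : T <= b).
  { unfold b. assert (0 <= 8 * PI * Z / L) by (apply Rmult_le_pos; [nra|left; apply Rinv_0_lt_compat; lra]). lra. }
  pose proof (dini_exp I T b (L/4) (- (2 * PI * C)) Hb ltac:(lra)
      (II_contOn a ax at_ xm th T b HS HX Hth ltac:(lra))) as Hgr.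
  assert (HDl : - (2 * PI * C) / (L / 4) = - Q) by (unfold Q; field; lra).
  rewrite HDl in Hgr.
  assert (Hgr2 : (I T + - Q) * exp (- (L / 4) * T) <= (I b + - Q) * exp (- (L / 4) * b)).
  { apply Hgr. intros t Ht eps He.
    destruct (II_dini a ax at_ xm th t HS HX Hth ltac:(lra) eps He) as [h0 [Hh0 Hh0']].
    exists h0. split; auto. intros h Hh. specialize (Hh0' h Hh).
    destruct (Late t ltac:(lra)) as [Lb1 Lb2].
    assert (Hphi : L/4 * I t - 2 * PI * C <= RInt (fun x => phiE (a t (xm t)) (a t x) th) (- PI) PI).
    { assert (CGt := GW_contI a ax at_ xm th t HS HX Hth ltac:(lra)).
      assert (E1 : RInt (fun x => L/4 * Gam (WW a xm th t x) + - C) (-PI) PI = L/4 * I t + 2 * PI * (- C)).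
      { rewrite RI_plus. rewrite RI_scal by auto. rewrite RI_const. reflexivity.
        apply contI_mult; auto. apply contI_const. apply contI_const. }
      assert (E2 : RInt (fun x => L/4 * Gam (WW a xm th t x) + - C) (-PI) PI <=
                   RInt (fun x => phiE (a t (xm t)) (a t x) th) (- PI) PI).
      { apply RI_le. apply contI_plus. apply contI_mult. apply contI_const. auto. apply contI_const.
        apply (phi_contI a ax at_ xm th t); auto; lra.
        intros x Hx. destruct (HX t ltac:(lra)) as [Hm1 Hm2].
        pose proof (phi_bound2 (a t (xm t)) (a t x) th L Hth HL (Hm2 x Hx) Lb2 (Lb1 x Hx)).
        unfold WW. fold C in H0. lra. }
      lra. }
    fold I in Hh0'.
    assert (L / 4 * I t + - (2 * PI * C) - eps <= RInt (fun x => phiE (a t (xm t)) (a t x) th) (- PI) PI - eps) by lra.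
    assert (0 < h) by lra. nra. }
  assert (Hub : I b <= 2 * PI * Z).
  { rewrite <- HGth. unfold I. apply (II_upper a ax at_ xm th b); auto. lra. }
  assert (He : exp (- (L/4) * b) * exp ((L/4) * (b - T)) = exp (- (L/4) * T)).
  { rewrite <- exp_plus. f_equal. ring. }
  assert (Hexp : 1 + (L/4) * (b - T) <= exp ((L/4) * (b - T))) by apply exp_ineq1_le.
  assert (HbT : (L/4) * (b - T) = 2 * PI * Z) by (unfold b; field; lra).
  rewrite <- He in Hgr2.
  assert (Hpb : 0 < exp (- (L/4) * b)) by apply exp_pos.
  set (E := exp ((L/4) * (b - T))) in *.
  assert (Hg3 : (I T + - Q) * E <= I b + - Q).
  { apply Rmult_le_reg_l with (exp (- (L/4) * b)); auto. lra. }
  assert (Hg4 : 1 * E <= (I T + - Q) * E).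
  { apply Rmult_le_compat_r. unfold E; left; apply exp_pos. lra. }
  lra.
Qed.


Lemma lip_mvt f df a b B : (forall z, Rmin a b <= z <= Rmax a b -> is_derive f z (df z)) ->
  (forall z, Rmin a b <= z <= Rmax a b -> Rabs (df z) <= B) -> Rabs (f b - f a) <= B * Rabs (b - a).
Proof.
  intros Hd HB.
  destruct (MVT_gen f a b df) as [c [Hc Heq]].
  - intros; apply Hd; lra.
  - intros z Hz. apply continuity_pt_filterlim.
    apply (ex_derive_continuous (K:=R_AbsRing) (V:=R_NormedModule) f). eexists. apply Hd; auto.
  - rewrite Heq, Rabs_mult. apply Rmult_le_compat_r. apply Rabs_pos. apply HB; auto.
Qed.

Lemma sin_lip x y : Rabs (sin y - sin x) <= Rabs (y - x).
Proof.
  rewrite <- (Rmult_1_l (Rabs (y - x))). apply (lip_mvt sin cos).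
  intros; apply is_derive_Reals, derivable_pt_lim_sin.
  intros; apply Rabs_le; apply COS_bound.
Qed.

Lemma cos_lip x y : Rabs (cos y - cos x) <= Rabs (y - x).
Proof.
  rewrite <- (Rmult_1_l (Rabs (y - x))). apply (lip_mvt cos (fun z => - sin z)).
  intros; apply is_derive_Reals, derivable_pt_lim_cos.
  intros; rewrite Rabs_Ropp; apply Rabs_le; apply SIN_bound.
Qed.

Lemma cos_taylor a b : Rabs (cos b - cos a + sin a * (b - a)) <= (b - a)^2.
Proof.
  destruct (MVT_gen cos a b (fun z => - sin z)) as [c [Hc Heq]].
  - intros; apply is_derive_Reals, derivable_pt_lim_cos.
  - intros. apply derivable_continuous_pt. apply derivable_pt_cos.
  - rewrite Heq. replace (- sin c * (b - a) + sin a * (b - a)) with ((sin a - sin c) * (b - a)) by ring.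
    rewrite Rabs_mult. 
    assert (Rabs (sin a - sin c) <= Rabs (b - a)).
    { eapply Rle_trans. apply sin_lip. unfold Rmin, Rmax in Hc. destruct Rle_dec; split_Rabs; lra. }
    rewrite <- (pow2_abs (b - a)). pose proof (Rabs_pos (b - a)). pose proof (Rabs_pos (sin a - sin c)). nra.
Qed.

Definition pp (del x : R) := x - Rmax (- del) (Rmin del x).
Definition lam0 (del : R) := PI / (PI - del).
Definition a0f (del : R) (x : R) := cos (lam0 del * pp del x) - del / PI.
Definition gf (del : R) (x : R) := sin x - lam0 del * sin (lam0 del * pp del x).

Lemma pp_mid del x : 0 < del -> - del <= x <= del -> pp del x = 0.
Proof. intros. unfold pp, Rmax, Rmin. repeat destruct Rle_dec; lra. Qed.
Lemma pp_right del x : 0 < del -> del <= x -> pp del x = x - del.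
Proof. intros. unfold pp, Rmax, Rmin. repeat destruct Rle_dec; lra. Qed.
Lemma pp_left del x : 0 < del -> x <= - del -> pp del x = x + del.
Proof. intros. unfold pp, Rmax, Rmin. repeat destruct Rle_dec; lra. Qed.
Lemma pp_lip del x y : 0 < del -> Rabs (pp del y - pp del x) <= Rabs (y - x).
Proof. intros. unfold pp, Rmax, Rmin. repeat destruct Rle_dec; split_Rabs; lra. Qed.

Lemma lam0_bounds del : 0 < del <= 1 -> 1 <= lam0 del <= 3/2 /\ lam0 del - 1 <= del / 2
  /\ lam0 del * (PI - del) = PI.
Proof.
  intros Hd. pose proof PI_gt3. unfold lam0. repeat split.
  - apply Rmult_le_reg_r with (PI - del). lra. unfold Rdiv. rewrite Rmult_assoc, Rinv_l by lra. lra.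
  - apply Rmult_le_reg_r with (PI - del). lra. unfold Rdiv. rewrite Rmult_assoc, Rinv_l by lra. lra.
  - replace (PI / (PI - del) - 1) with (del / (PI - del)) by (field; lra).
    apply Rmult_le_reg_r with (2 * (PI - del)). lra. unfold Rdiv.
    replace (del * / (PI - del) * (2 * (PI - del))) with (2 * del) by (field; lra).
    replace (del * / 2 * (2 * (PI - del))) with (del * (PI - del)) by field. nra.
  - field. lra.
Qed.

Lemma lam_pp_close del x : 0 < del <= 1 -> Ipi x -> Rabs (lam0 del * pp del x - x) <= del.
Proof.
  intros Hd Hx. pose proof PI_gt3. destruct (lam0_bounds del Hd) as [[L1 L2] [L3 L4]].
  unfold Ipi in Hx.
  destruct (Rle_dec del x).
  - rewrite pp_right by lra.
    replace (lam0 del * (x - del) - x) with ((lam0 del - 1) * x - lam0 del * del) by ring.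
    assert ((lam0 del - 1) * x - lam0 del * del <= 0).
    { assert ((lam0 del - 1) * x <= (lam0 del - 1) * PI) by (apply Rmult_le_compat_l; lra).
      assert ((lam0 del - 1) * PI = lam0 del * del) by nra. lra. }
    assert (- del <= (lam0 del - 1) * x - lam0 del * del).
    { assert ((lam0 del - 1) * del <= (lam0 del - 1) * x) by (apply Rmult_le_compat_l; lra). nra. }
    apply Rabs_le. lra.
  - destruct (Rle_dec x (- del)).
    + rewrite pp_left by lra.
      replace (lam0 del * (x + del) - x) with ((lam0 del - 1) * x + lam0 del * del) by ring.
      assert (0 <= (lam0 del - 1) * x + lam0 del * del).
      { assert ((lam0 del - 1) * (- PI) <= (lam0 del - 1) * x) by (apply Rmult_le_compat_l; lra).
        assert ((lam0 del - 1) * PI = lam0 del * del) by nra. lra. }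
      assert ((lam0 del - 1) * x + lam0 del * del <= del).
      { assert ((lam0 del - 1) * x <= (lam0 del - 1) * (- del)) by (apply Rmult_le_compat_l; lra). nra. }
      apply Rabs_le. lra.
    + rewrite pp_mid by lra. rewrite Rmult_0_r. apply Rabs_le. lra.
Qed.

Lemma A_deriv del x : 0 < del <= 1 ->
  derivable_pt_lim (fun y => cos (lam0 del * pp del y)) x (- lam0 del * sin (lam0 del * pp del x)).
Proof.
  intros Hd eps He. destruct (lam0_bounds del Hd) as [[L1 L2] [L3 L4]].
  set (l := lam0 del) in *.
  set (d0 := if Rle_dec (Rabs x) del then 1 else Rabs x - del).
  assert (Hd0 : 0 < d0) by (unfold d0; destruct Rle_dec; lra).
  assert (Key : forall h, Rabs h < d0 -> sin (l * pp del x) * (pp del (x + h) - pp del x) = sin (l * pp del x) * h).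
  { intros h Hh. unfold d0 in Hh. destruct Rle_dec as [Hle|Hgt].
    - rewrite (pp_mid del x) by (lra || (apply Rabs_le_between in Hle; lra)).
      rewrite Rmult_0_r, sin_0. ring.
    - apply Rnot_le_lt in Hgt. apply Rabs_lt_between in Hh.
      destruct (Rle_dec 0 x).
      + rewrite Rabs_right in Hh, Hgt by lra. rewrite !pp_right by lra. f_equal. ring.
      + rewrite Rabs_left in Hh, Hgt by lra. rewrite !pp_left by lra. f_equal. ring. }
  assert (Hm : 0 < Rmin d0 (eps / (l^2 + 1))) by (apply Rmin_pos; auto; apply Rdiv_lt_0_compat; nra).
  exists (mkposreal _ Hm). intros h Hh0 Hh. simpl in Hh.
  assert (Hh1 : Rabs h < d0) by (eapply Rlt_le_trans; [exact Hh|apply Rmin_l]).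
  assert (Hh2 : Rabs h < eps / (l^2 + 1)) by (eapply Rlt_le_trans; [exact Hh|apply Rmin_r]).
  set (u := l * pp del (x + h)). set (v := l * pp del x).
  pose proof (cos_taylor v u) as T.
  assert (Huv : Rabs (u - v) <= l * Rabs h).
  { unfold u, v. rewrite <- Rmult_minus_distr_l, Rabs_mult, (Rabs_right l) by lra.
    apply Rmult_le_compat_l. lra. replace h with (x + h - x) at 2 by ring. apply pp_lip. lra. }
  assert (Hsv : sin v * (u - v) = l * (sin v * h)).
  { unfold u, v. rewrite <- Rmult_minus_distr_l. fold v. 
    transitivity (l * (sin v * (pp del (x + h) - pp del x))). ring. f_equal. apply Key; auto. }
  assert (Hq : (cos u - cos v) / h - - l * sin v = (cos u - cos v + sin v * (u - v)) / h).
  { rewrite Hsv. field. auto. }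
  rewrite Hq. unfold Rdiv. rewrite Rabs_mult, Rabs_inv.
  assert (0 < Rabs h) by (apply Rabs_pos_lt; auto).
  apply Rle_lt_trans with ((u - v)^2 * / Rabs h).
  apply Rmult_le_compat_r. left; apply Rinv_0_lt_compat; auto. auto.
  assert ((u - v)^2 <= l^2 * Rabs h * Rabs h).
  { rewrite <- (pow2_abs (u - v)). pose proof (Rabs_pos (u - v)).
    assert (Rabs (u - v) * Rabs (u - v) <= (l * Rabs h) * (l * Rabs h)) by (apply Rmult_le_compat; auto).
    nra. }
  apply Rle_lt_trans with (l^2 * Rabs h).
  { apply Rmult_le_reg_r with (Rabs h); auto. rewrite Rmult_assoc, Rinv_l by lra. lra. }
  apply Rmult_lt_compat_l with (r := l^2 + 1) in Hh2. 2: nra.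
  replace ((l ^ 2 + 1) * (eps / (l ^ 2 + 1))) with eps in Hh2 by (field; nra).
  nra.
Qed.

Lemma f_deriv del x : 0 < del <= 1 ->
  derivable_pt_lim (fun y => a0f del y - cos y) x (gf del x).
Proof.
  intros Hd. unfold a0f, gf.
  replace (sin x - lam0 del * sin (lam0 del * pp del x)) with
    ((- lam0 del * sin (lam0 del * pp del x) - 0) - - sin x) by ring.
  apply (derivable_pt_lim_minus (fun y => cos (lam0 del * pp del y) - del / PI) cos).
  apply (derivable_pt_lim_minus (fun y => cos (lam0 del * pp del y)) (fun _ => del / PI)).
  apply A_deriv; auto. apply derivable_pt_lim_const. apply derivable_pt_lim_cos.
Qed.

Lemma deriv_of_lim F G : (forall x, derivable_pt_lim F x (G x)) -> deriv_on_Ipi F G.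
Proof.
  intros HD x Hx eta He. destruct (HD x eta He) as [d Hd].
  exists d. split. apply cond_pos. intros y Hy [Hy1 Hy2].
  assert (y - x <> 0) by (intros E; rewrite E, Rabs_R0 in Hy1; lra).
  specialize (Hd (y - x) H Hy2). replace (x + (y - x)) with y in Hd by ring. lra.
Qed.

Lemma a0f_cont del x : 0 < del <= 1 -> continuity_pt (a0f del) x.
Proof.
  intros Hd. apply derivable_continuous_pt. exists (- lam0 del * sin (lam0 del * pp del x) - 0).
  unfold a0f. apply (derivable_pt_lim_minus (fun y => cos (lam0 del * pp del y)) (fun _ => del / PI)).
  apply A_deriv; auto. apply derivable_pt_lim_const.
Qed.


Lemma contI_of_cont f : (forall x, continuity_pt f x) -> contI f.
Proof.
  intros H x Hx eta He.
  destruct (proj1 (continuity_pt_locally _ _) (H x) (mkposreal eta He)) as [d Hd].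
  exists d. split. apply cond_pos. intros y Hy Hyx. apply (Hd y Hyx).
Qed.

Lemma piece_int (F f : R -> R) lo hi : lo <= hi ->
  (forall x, is_derive F x (f x)) -> (forall x, continuity_pt f x) ->
  RInt f lo hi = F hi - F lo.
Proof.
  intros Hlh HD Hc. apply is_RInt_unique.
  apply (is_RInt_derive (V:=R_CompleteNormedModule)). intros; apply HD.
  intros; apply continuity_pt_filterlim; apply Hc.
Qed.

Lemma a0f_int del : 0 < del <= 1 -> RInt (a0f del) (-PI) PI = 0.
Proof.
  intros Hd. pose proof PI_gt3. destruct (lam0_bounds del Hd) as [[L1 L2] [L3 L4]].
  set (l := lam0 del) in *.
  assert (Ca : contI (a0f del)) by (apply contI_of_cont; intros; apply a0f_cont; auto).
  rewrite (RInt_split3 _ (-PI) (-del) del PI) by (auto; unfold Ipi; lra).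
  assert (R1 : RInt (a0f del) (-PI) (-del) = del^2/PI - del).
  { rewrite (RInt_ext _ (fun x => cos (l * (x + del)) - del / PI)).
    2: { intros x Hx. rewrite Rmin_left, Rmax_right in Hx by lra. unfold a0f. fold l.
         rewrite pp_left by lra. reflexivity. }
    rewrite (piece_int (fun x => sin (l * (x + del)) / l - del / PI * x)).
    - replace (l * (- del + del)) with 0 by ring. rewrite sin_0.
      replace (l * (- PI + del)) with (- PI) by nra. rewrite sin_neg, sin_PI. match goal with |- @eq _ ?x ?y => change (@eq R x y) end. field. split; lra.
    - lra.
    - intros x. auto_derive. auto. field. lra.
    - intros x. apply derivable_continuous_pt. apply ex_derive_Reals_0. auto_derive. auto. }
  assert (R2 : RInt (a0f del) del PI = del^2/PI - del).
  { rewrite (RInt_ext _ (fun x => cos (l * (x - del)) - del / PI)).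
    2: { intros x Hx. rewrite Rmin_left, Rmax_right in Hx by lra. unfold a0f. fold l.
         rewrite pp_right by lra. reflexivity. }
    rewrite (piece_int (fun x => sin (l * (x - del)) / l - del / PI * x)).
    - replace (l * (del - del)) with 0 by ring. rewrite sin_0.
      replace (l * (PI - del)) with PI by nra. rewrite sin_PI. match goal with |- @eq _ ?x ?y => change (@eq R x y) end. field. split; lra.
    - lra.
    - intros x. auto_derive. auto. unfold Rminus. field. lra.
    - intros x. apply derivable_continuous_pt. apply ex_derive_Reals_0. auto_derive. auto. }
  assert (R3 : RInt (a0f del) (-del) del = 2 * del - 2 * del^2 / PI).
  { rewrite (RInt_ext _ (fun _ => 1 - del / PI)).
    2: { intros x Hx. rewrite Rmin_left, Rmax_right in Hx by lra. unfold a0f.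
         rewrite pp_mid by lra. rewrite Rmult_0_r, cos_0. reflexivity. }
    rewrite (RInt_const (V:=R_CompleteNormedModule)).
    change ((del - - del) * (1 - del / PI) = 2 * del - 2 * del ^ 2 / PI :> R). field. lra. }
  rewrite R1, R2, R3. match goal with |- @eq _ ?x ?y => change (@eq R x y) end. field. lra.
Qed.

Lemma f_sup del x : 0 < del <= 1 -> Ipi x -> Rabs (a0f del x - cos x) <= 2 * del.
Proof.
  intros Hd Hx. pose proof PI_gt3. unfold a0f.
  pose proof (cos_lip x (lam0 del * pp del x)). pose proof (lam_pp_close del x Hd Hx).
  replace (cos (lam0 del * pp del x) - del / PI - cos x) with ((cos (lam0 del * pp del x) - cos x) - del / PI) by ring.
  eapply Rle_trans. apply Rabs_triang. rewrite Rabs_Ropp, (Rabs_right (del / PI)).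
  2: { apply Rle_ge, Rlt_le, Rdiv_lt_0_compat; lra. }
  assert (del / PI <= del). { apply Rmult_le_reg_r with PI. lra. unfold Rdiv. rewrite Rmult_assoc, Rinv_l by lra. nra. }
  lra.
Qed.

Lemma g_sup del x : 0 < del <= 1 -> Ipi x -> Rabs (gf del x) <= 2 * del.
Proof.
  intros Hd Hx. destruct (lam0_bounds del Hd) as [[L1 L2] [L3 L4]]. unfold gf.
  pose proof (sin_lip x (lam0 del * pp del x)). pose proof (lam_pp_close del x Hd Hx).
  replace (sin x - lam0 del * sin (lam0 del * pp del x)) with
    (- (sin (lam0 del * pp del x) - sin x) - (lam0 del - 1) * sin (lam0 del * pp del x)) by ring.
  eapply Rle_trans. apply Rabs_triang. rewrite Rabs_Ropp, Rabs_Ropp, Rabs_mult, (Rabs_right (lam0 del - 1)) by lra.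
  assert (Rabs (sin (lam0 del * pp del x)) <= 1) by (apply Rabs_le; apply SIN_bound).
  assert ((lam0 del - 1) * Rabs (sin (lam0 del * pp del x)) <= del / 2).
  { apply Rle_trans with ((lam0 del - 1) * 1). apply Rmult_le_compat_l; lra. lra. }
  lra.
Qed.

Lemma g_lip del x y : 0 < del <= 1 -> Rabs (gf del x - gf del y) <= 5 * Rabs (x - y).
Proof.
  intros Hd. destruct (lam0_bounds del Hd) as [[L1 L2] [L3 L4]]. unfold gf.
  set (l := lam0 del) in *.
  replace (sin x - l * sin (l * pp del x) - (sin y - l * sin (l * pp del y))) with
    ((sin x - sin y) - l * (sin (l * pp del x) - sin (l * pp del y))) by ring.
  eapply Rle_trans. apply Rabs_triang. rewrite Rabs_Ropp, Rabs_mult, (Rabs_right l) by lra.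
  pose proof (sin_lip y x).
  pose proof (sin_lip (l * pp del y) (l * pp del x)).
  rewrite <- Rmult_minus_distr_l, Rabs_mult, (Rabs_right l) in H0 by lra.
  pose proof (pp_lip del y x ltac:(lra)).
  assert (Rabs (sin (l * pp del x) - sin (l * pp del y)) <= l * Rabs (x - y)).
  { eapply Rle_trans. exact H0. apply Rmult_le_compat_l; lra. }
  assert (l * Rabs (sin (l * pp del x) - sin (l * pp del y)) <= l * (l * Rabs (x - y))).
  { apply Rmult_le_compat_l; lra. }
  pose proof (Rabs_pos (x - y)).
  assert (l * l <= 9/4) by nra.
  assert (l * (l * Rabs (x - y)) <= 9/4 * Rabs (x - y)) by (rewrite <- Rmult_assoc; apply Rmult_le_compat_r; lra).
  lra.
Qed.

Lemma f_lip del x y : 0 < del <= 1 -> Ipi x -> Ipi y ->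
  Rabs (a0f del x - cos x - (a0f del y - cos y)) <= 2 * del * Rabs (x - y).
Proof.
  intros Hd Hx Hy.
  apply (lip_mvt (fun z => a0f del z - cos z) (gf del) y x (2 * del)).
  - intros z _. apply is_derive_Reals. apply f_deriv; auto.
  - intros z Hz. apply g_sup; auto. unfold Ipi in *. unfold Rmin, Rmax in Hz. destruct Rle_dec; lra.
Qed.

Lemma exp_mono_le x y : x <= y -> exp x <= exp y.
Proof. intros H. destruct (Req_dec x y) as [->|Hn]. lra. left. apply exp_increasing. lra. Qed.

Lemma rp_le1 r s : 0 < r <= 2 * PI -> 0 < s <= 1 -> r <= 2 * PI * Rpower r s.
Proof.
  intros Hr Hs. pose proof PI_gt3. unfold Rpower.
  rewrite <- (exp_ln r) at 1 by lra. rewrite <- (exp_ln (2 * PI)) at 1 by lra.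
  rewrite <- exp_plus. apply exp_mono_le.
  assert (ln r <= ln (2 * PI)) by (apply ln_le; lra).
  assert (0 < ln (2 * PI)) by (rewrite <- ln_1; apply ln_increasing; lra).
  destruct (Rle_dec 0 (ln r)); nra.
Qed.

Lemma rp_interp r del al : 0 < r -> 0 < del -> 0 < al < 1 ->
  (r <= del -> r <= Rpower del (1 - al) * Rpower r al) /\
  (del <= r -> del <= Rpower del (1 - al) * Rpower r al).
Proof.
  intros Hr Hd Ha. unfold Rpower. rewrite <- exp_plus. split; intros H.
  - rewrite <- (exp_ln r) at 1 by lra. 
    assert (ln r <= ln del) by (apply ln_le; lra).
    apply exp_mono_le. nra.
  - rewrite <- (exp_ln del) at 1 by lra.
    assert (ln del <= ln r) by (apply ln_le; lra).
    apply exp_mono_le. nra.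
Qed.


Lemma no_sol del : 0 < del <= 1 -> forall mu : R, mu <> 0 ->
  ~ (exists a : R -> R -> R, global_solution a (a0f del) /\ converges_to_mu_cos a mu).
Proof.
  intros Hd mu Hmu [a [[H0 [Hc [HR [ax [at_ [Hdx [Hcx [Ht Hpde]]]]]]]] Hconv]].
  pose proof PI_gt3.
  apply (main_contra a ax at_ (a0f del) mu (1 - del / PI) del).
  - exact (conj Hc (conj Hcx (conj HR (conj Hdx (conj Ht Hpde))))).
  - exact H0.
  - intros z _. unfold a0f. pose proof (COS_bound (lam0 del * pp del z)). lra.
  - intros z Hz. unfold a0f. rewrite pp_mid by lra. rewrite Rmult_0_r, cos_0. ring.
  - lra.
  - exact Hmu.
  - exact Hconv.
Qed.

Theorem theorem1p5 :
  forall eps sigma : R, 0 < eps < 2 -> 0 < sigma ->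
  exists a0 : R -> R,
    RInt a0 (- PI) PI = 0 /\
    holder_norm_le (2 - eps) (fun x => a0 x - cos x) sigma /\
    forall mu : R, mu <> 0 ->
      ~ (exists a : R -> R -> R, global_solution a a0 /\ converges_to_mu_cos a mu).
Proof.
  intros eps sigma Heps Hsig. pose proof PI_gt3. pose proof PI_4.
  destruct (Rle_dec (2 - eps) 1) as [Hs|Hs].
  - set (del := Rmin (sigma / 20) 1).
    assert (Hd : 0 < del <= 1).
    { split. apply Rmin_pos; lra. apply Rmin_r. }
    assert (Hd2 : del <= sigma / 20) by apply Rmin_l.
    exists (a0f del). split. apply a0f_int; auto. split.
    + left. split; auto. exists (2 * del), (2 * del * (2 * PI)). repeat split.
      * intros x Hx. apply f_sup; auto.
      * intros x y Hx Hy Hxy. eapply Rle_trans. apply f_lip; auto.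
        apply Rle_trans with (2 * del * (2 * PI * Rpower (Rabs (x - y)) (2 - eps))).
        apply Rmult_le_compat_l. lra.
        apply rp_le1. split. apply Rabs_pos_lt; lra. unfold Ipi in *; split_Rabs; lra. lra.
        right; ring.
      * nra.
    + apply no_sol; auto.
  - apply Rnot_le_lt in Hs.
    set (s2 := Rmin (sigma / 20) (1/2)).
    assert (Hs2 : 0 < s2 <= 1/2) by (split; [apply Rmin_pos; lra|apply Rmin_r]).
    assert (Hs2' : s2 <= sigma / 20) by apply Rmin_l.
    set (del := exp (ln s2 / eps)).
    assert (Hln : ln s2 < 0) by (rewrite <- ln_1; apply ln_increasing; lra).
    assert (Hdle : del <= s2).
    { unfold del. rewrite <- (exp_ln s2) at 2 by lra. apply exp_mono_le.
      apply Rmult_le_reg_r with eps. lra. unfold Rdiv. rewrite Rmult_assoc, Rinv_l by lra. nra. }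
    assert (Hd : 0 < del <= 1) by (split; [apply exp_pos|lra]).
    assert (Hpow : Rpower del eps = s2).
    { unfold Rpower, del. rewrite ln_exp. replace (eps * (ln s2 / eps)) with (ln s2) by (field; lra).
      apply exp_ln; lra. }
    exists (a0f del). split. apply a0f_int; auto. split.
    + right. split; auto. exists (gf del), (2 * del), (2 * del), (5 * s2). repeat split.
      * apply deriv_of_lim. intros x. apply f_deriv; auto.
      * intros x Hx. apply f_sup; auto.
      * intros x Hx. apply g_sup; auto.
      * intros x y Hx Hy Hxy.
        set (r := Rabs (x - y)). assert (Hr : 0 < r) by (apply Rabs_pos_lt; lra).
        set (al := 2 - eps - 1).
        assert (Hal : 0 < al < 1) by (unfold al; lra).
        destruct (rp_interp r del al Hr ltac:(lra) Hal) as [P1 P2].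
        replace (1 - al) with eps in P1, P2 by (unfold al; ring). rewrite Hpow in P1, P2.
        pose proof (g_lip del x y Hd). fold r in H1.
        pose proof (g_sup del x Hd Hx). pose proof (g_sup del y Hd Hy).
        assert (Rabs (gf del x - gf del y) <= 4 * del).
        { eapply Rle_trans. apply Rabs_triang. rewrite Rabs_Ropp. lra. }
        assert (0 <= Rpower r al) by (left; apply exp_pos).
        destruct (Rle_dec r del).
        -- specialize (P1 r0). nra.
        -- specialize (P2 ltac:(lra)). nra.
      * lra.
    + apply no_sol; auto.
Qed.
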